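(* Let $m\ge 2$. For $i=1,\dots,m$ let $p_i(z)=\sum_{j\ge1}p_{i,j}z^j$ be a power series with nonnegative real coefficients, zero constant term and radius of convergence $R_i>0$. For $n\ge0$ let $$D_n=\sum_{(c_1,\dots,c_m)}\ \prod_{i=1}^m\ \prod_{\ell=1}^{k} p_{i,c_{i,\ell}},$$ where the sum ranges over all $m$-tuples $(c_1,\dots,c_m)$ such that, for some common $k\ge0$, each $c_i=(c_{i,1},\dots,c_{i,k})$ is a composition of $n$ with exactly $k$ parts (a $k$-tuple of positive integers summing to $n$; for $n=0$ only the empty composition with $k=0$ is allowed, contributing $1$). (When all $p_{i,j}\in\{0,1\}$, $D_n$ is the number of $m$-tuples of compositions of $n$, the $i$-th one having all its parts in $\mathcal P_i=\{j: p_{i,j}=1\}$, all having the same number of parts.) Let $D(z)=\sum_{n\ge0}D_nz^n$. Fix radii $r_2,\dots,r_m>0$ with $1/r_i<R_i$ for $i=2,\dots,m$. Then there is $\delta>0$ such that for all complex $z$ with $|z|<\delta$ the series $D(z)$ converges and $$D(z)=\frac{1}{(2i\pi)^{m-1}}\oint\cdots\oint \frac{1}{1-p_1(z\,t_2\cdots t_m)\,p_2(1/t_2)\cdots p_m(1/t_m)}\,\frac{dt_2}{t_2}\cdots\frac{dt_m}{t_m},$$ where each $t_j$ runs counterclockwise over the circle $|t_j|=r_j$. *)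

(* Defs.v *)
From Stdlib Require Import Reals List.
From Coquelicot Require Import Coquelicot.
Import ListNotations.
Open Scope R_scope.

Fixpoint compositions (k n : nat) : list (list nat) :=
  match k with
  | O => match n with O => [[]] | S _ => [] end
  | S k' => flat_map (fun j => map (fun c => j :: c) (compositions k' (n - j)))
                     (seq 1 n)
  end.

Fixpoint tuples {A : Type} (m : nat) (l : list A) : list (list A) :=
  match m with
  | O => [[]]
  | S m' => flat_map (fun x => map (fun t => x :: t) (tuples m' l)) l
  end.

Definition Rsum (l : list R) : R := fold_right Rplus 0 l.
Definition Rprod (l : list R) : R := fold_right Rmult 1 l.

(** Weight of an m-tuple of compositions (c_1,...,c_m): the i-th composition
    (i = 1..m) contributes prod_l p i (c_{i,l}). *)
Definition tuple_weight (p : nat -> nat -> R) (cs : list (list nat)) : R :=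
  Rprod (map (fun i => Rprod (map (p (i + 1)%nat) (nth i cs [])))
             (seq 0 (length cs))).

(** D_n: sum over all m-tuples of compositions of n having a common number k
    of parts.  Since a composition of n has at most n parts (and k = 0 only
    for n = 0), k ranges over 0..n. *)
Definition Dcoef (m : nat) (p : nat -> nat -> R) (n : nat) : R :=
  Rsum (map (fun k => Rsum (map (tuple_weight p) (tuples m (compositions k n))))
            (seq 0 (S n))).

Definition pser_partial (a : nat -> R) (z : C) (N : nat) : C :=
  @sum_n C_AbelianMonoid (fun j => Cmult (RtoC (a j)) (@pow_n C_Ring z j)) N.
Definition pser (a : nat -> R) (z : C) : C :=
  (real (Lim_seq (fun N => fst (pser_partial a z N))),
   real (Lim_seq (fun N => snd (pser_partial a z N)))).

Definition Cprod (l : list C) : C := fold_right Cmult (RtoC 1) l.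

Definition circ (r th : R) : C := (r * cos th, r * sin th).
Definition circ' (r th : R) : C := (- (r * sin th), r * cos th).

Definition contour_circle (r : R) (f : C -> C) : C :=
  @RInt C_R_CompleteNormedModule (fun th => Cmult (f (circ r th)) (circ' r th))
        0 (2 * PI).

(** Iterated contour integrals over circles of radii rs (first radius is the
    outermost integral); the variables are passed to F as a list. *)
Fixpoint iter_contour (rs : list R) (F : list C -> C) : C :=
  match rs with
  | [] => F []
  | r :: rs' => contour_circle r (fun t => iter_contour rs' (fun ts => F (t :: ts)))
  end.

(** The integrand 1/(1 - p1(z t2..tm) p2(1/t2)...pm(1/tm)) * 1/(t2...tm),
    where ts = [t_2; ...; t_m]. *)
Definition integrand (m : nat) (p : nat -> nat -> R) (z : C) (ts : list C) : C :=
  Cmult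
    (Cinv (Cminus (RtoC 1)
       (Cmult (pser (p 1%nat) (Cmult z (Cprod ts)))
              (Cprod (map (fun j => pser (p (j + 2)%nat) (Cinv (nth j ts (RtoC 1))))
                          (seq 0 (m - 1)))))))
    (Cprod (map Cinv ts)).

(* Main.v *)
Require Import Defs.
From Stdlib Require Import Reals List Lia Lra FunctionalExtensionality.
From Coquelicot Require Import Coquelicot.
Import ListNotations.
Open Scope R_scope.

Fixpoint pw (a : nat -> R) (k n : nat) : R :=
  match k with
  | O => if Nat.eqb n 0 then 1 else 0
  | S k' => sum_f_R0 (fun j => a j * pw a k' (n - j)%nat) n
  end.

Lemma Rsum_app l1 l2 : Rsum (l1 ++ l2) = Rsum l1 + Rsum l2.
Proof. induction l1; simpl; [ring| rewrite IHl1; ring]. Qed.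

Lemma Rsum_flat_map {A B} (f : A -> list B) (g : B -> R) l :
  Rsum (map g (flat_map f l)) = Rsum (map (fun x => Rsum (map g (f x))) l).
Proof. induction l; simpl; auto. rewrite map_app, Rsum_app, IHl. auto. Qed.

Lemma Rsum_scal {A} (g : A -> R) c l :
  Rsum (map (fun x => c * g x) l) = c * Rsum (map g l).
Proof. induction l; simpl; [ring| rewrite IHl; ring]. Qed.

Lemma Rsum_seq (g : nat -> R) s n :
  Rsum (map g (seq s (S n))) = sum_f_R0 (fun i => g (s + i)%nat) n.
Proof.
  induction n.
  - simpl. rewrite Nat.add_0_r. ring.
  - rewrite seq_S, map_app, Rsum_app, IHn. simpl. ring_simplify.
    replace (s + S n)%nat with (S (s + n)) by lia. ring.
Qed.

Lemma sum_shift1 (g : nat -> R) n :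
  sum_f_R0 g (S n) = g 0%nat + sum_f_R0 (fun i => g (1 + i)%nat) n.
Proof.
  induction n. simpl. ring. change (sum_f_R0 g (S (S n))) with (sum_f_R0 g (S n) + g (S (S n))). rewrite IHn. simpl. ring.
Qed.

Lemma comp_sum (a : nat -> R) (a0 : a 0%nat = 0) :
  forall k n, Rsum (map (fun c => Rprod (map a c)) (compositions k n)) = pw a k n.
Proof.
  induction k; intros n.
  - destruct n; simpl; unfold Rprod; simpl; ring.
  - simpl. rewrite Rsum_flat_map.
    destruct n.
    + simpl. rewrite a0. ring.
    + transitivity (Rsum (map (fun j => a j * pw a k (S n - j)) (seq 1 (S n)))).
      * f_equal. apply map_ext. intros j. rewrite map_map.
        rewrite <- IHk. rewrite <- Rsum_scal. reflexivity.
      * rewrite Rsum_seq. rewrite sum_shift1. simpl (0 - 0)%nat. rewrite a0. ring.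
Qed.

Lemma Rsum_map_mult_l {A} (g : A -> R) (h : A -> R) (c : R) l :
  Rsum (map (fun x => g x * c) l) = Rsum (map g l) * c.
Proof. induction l; simpl; [ring| rewrite IHl; ring]. Qed.

Lemma tuples_sum (f : nat -> list nat -> R) (L : list (list nat)) :
  forall m s,
  Rsum (map (fun cs => Rprod (map (fun i => f (s + i)%nat (nth i cs [])) (seq 0 (length cs))))
            (tuples m L))
  = Rprod (map (fun i => Rsum (map (f (s + i)%nat) L)) (seq 0 m)).
Proof.
  induction m; intros s.
  - simpl. unfold Rprod, Rsum; simpl. ring.
  - simpl tuples. rewrite Rsum_flat_map.
    transitivity (Rsum (map (fun x => f s x *
       Rprod (map (fun i => Rsum (map (f (S s + i)%nat) L)) (seq 0 m))) L)).
    + f_equal. apply map_ext. intros x. rewrite map_map. rewrite <- IHm.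
      rewrite <- Rsum_scal. f_equal. apply map_ext. intros t.
      simpl length. cbn [seq map]. rewrite <- seq_shift, map_map.
      rewrite Nat.add_0_r. unfold Rprod at 1. cbn [fold_right]. f_equal.
      unfold Rprod. f_equal. apply map_ext. intros i. simpl. f_equal. lia.
    + rewrite (Rsum_map_mult_l (f s) (f s)). cbn [seq map]. rewrite <- seq_shift.
      rewrite map_map. unfold Rprod at 2; cbn [fold_right]. rewrite Nat.add_0_r. f_equal.
      unfold Rprod. f_equal. apply map_ext. intros i. replace (S s + i)%nat with (s + S i)%nat by lia. reflexivity.
Qed.

Definition Ekn (m : nat) (p : nat -> nat -> R) (k n : nat) : R :=
  Rprod (map (fun i => pw (p (i + 1)%nat) k n) (seq 0 m)).

Lemma Dcoef_eq m p (p0 : forall i, (1 <= i <= m)%nat -> p i 0%nat = 0) n :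
  Dcoef m p n = sum_f_R0 (fun k => Ekn m p k n) n.
Proof.
  unfold Dcoef. rewrite Rsum_seq. apply sum_eq. intros k _. simpl.
  unfold tuple_weight.
  pose proof (tuples_sum (fun j c => Rprod (map (p (j + 1)%nat) c)) (compositions k n) m 0) as H.
  simpl in H. rewrite H. unfold Ekn. f_equal.
  apply map_ext_in. intros i Hi. apply in_seq in Hi. apply comp_sum. apply p0. lia.
Qed.

Lemma pw_zero a (a0 : a 0%nat = 0) : forall k n, (n < k)%nat -> pw a k n = 0.
Proof.
  induction k; intros n Hn. lia. simpl.
  rewrite <- (sum_eq (fun _ => 0)). { clear. induction n; simpl; lra. }
  intros j Hj. destruct j. rewrite a0; ring. rewrite IHk by lia. ring.
Qed.

Lemma pw_nonneg a (ha : forall j, 0 <= a j) : forall k n, 0 <= pw a k n.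
Proof.
  induction k; intros n. simpl. destruct (Nat.eqb n 0); lra.
  simpl. apply cond_pos_sum. intros j. apply Rmult_le_pos; auto.
Qed.

Definition CL (u : nat -> C) (l : C) : Prop :=
  forall eps : R, 0 < eps -> exists N, forall n, (N <= n)%nat -> Cmod (u n - l)%C < eps.

Lemma Cmod_le_sum (z : C) : Cmod z <= Rabs (fst z) + Rabs (snd z).
Proof.
  unfold Cmod. rewrite <- (sqrt_pow2 (Rabs (fst z) + Rabs (snd z))).
  2:{ pose proof (Rabs_pos (fst z)); pose proof (Rabs_pos (snd z)); lra. }
  apply sqrt_le_1_alt. rewrite <- (pow2_abs (fst z)), <- (pow2_abs (snd z)).
  pose proof (Rabs_pos (fst z)); pose proof (Rabs_pos (snd z)). nra.
Qed.

Lemma Rabs_fst_le (z : C) : Rabs (fst z) <= Cmod z.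
Proof. apply (re_le_Cmod z). Qed.

Lemma Rabs_snd_le (z : C) : Rabs (snd z) <= Cmod z.
Proof.
  unfold Cmod. rewrite <- (sqrt_pow2 (Rabs (snd z))) by apply Rabs_pos.
  apply sqrt_le_1_alt. rewrite <- (pow2_abs (snd z)). pose proof (pow2_ge_0 (fst z)). lra.
Qed.

Lemma is_series_R_eps (a : nat -> R) l : is_series a l ->
  forall eps, 0 < eps -> exists N, forall n, (N <= n)%nat -> Rabs (sum_f_R0 a n - l) < eps.
Proof.
  intros H eps Heps. apply (filterlim_locally (sum_n a) l) with (eps := mkposreal eps Heps) in H.
  destruct H as [N HN]. exists N. intros n Hn. specialize (HN n Hn).
  rewrite <- sum_n_Reals. exact HN.
Qed.

Lemma is_series_R_lim (a : nat -> R) l : is_series a l -> is_lim_seq (sum_n a) l.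
Proof.
  intros H. apply is_lim_seq_spec. intros eps.
  destruct (is_series_R_eps a l H eps (cond_pos eps)) as [N HN]. exists N.
  intros n Hn. rewrite sum_n_Reals. auto.
Qed.

Lemma CL_unique u l1 l2 : CL u l1 -> CL u l2 -> l1 = l2.
Proof.
  intros H1 H2. apply Cminus_eq_0 || idtac.
  destruct (Req_dec (Cmod (l1 - l2)%C) 0) as [E|E].
  - apply Cmod_eq_0 in E. replace l1 with ((l1 - l2) + l2)%C by ring. rewrite E. ring.
  - exfalso. pose proof (Cmod_ge_0 (l1 - l2)%C) as P.
    set (e := Cmod (l1 - l2)%C / 2).
    assert (He : 0 < e) by (unfold e; lra).
    destruct (H1 e He) as [N1 HN1]. destruct (H2 e He) as [N2 HN2].
    specialize (HN1 (N1 + N2)%nat ltac:(lia)). specialize (HN2 (N1 + N2)%nat ltac:(lia)).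
    pose proof (Cmod_triangle (u (N1+N2)%nat - l2)%C (-(u (N1+N2)%nat - l1))%C) as T.
    rewrite Cmod_opp in T. replace (u (N1 + N2)%nat - l2 + - (u (N1 + N2)%nat - l1))%C
      with (l1 - l2)%C in T by ring. unfold e in *. lra.
Qed.

Lemma CL_ext u v l : (forall n, u n = v n) -> CL u l -> CL v l.
Proof. intros E H eps He. destruct (H eps He) as [N HN]. exists N. intros n Hn. rewrite <- E. auto. Qed.

Lemma CL_ext_ev u v l N0 : (forall n, (N0 <= n)%nat -> u n = v n) -> CL u l -> CL v l.
Proof. intros E H eps He. destruct (H eps He) as [N HN]. exists (N + N0)%nat.
  intros n Hn. rewrite <- E by lia. apply HN. lia. Qed.

Lemma CL_const c : CL (fun _ => c) c.
Proof. intros eps He. exists 0%nat. intros. replace (c - c)%C with (RtoC 0) by ring.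
  rewrite Cmod_0. auto. Qed.

Lemma CL_plus u v a b : CL u a -> CL v b -> CL (fun n => u n + v n)%C (a + b)%C.
Proof.
  intros Hu Hv eps He. destruct (Hu (eps/2) ltac:(lra)) as [N1 H1].
  destruct (Hv (eps/2) ltac:(lra)) as [N2 H2]. exists (N1 + N2)%nat. intros n Hn.
  replace (u n + v n - (a + b))%C with ((u n - a) + (v n - b))%C by ring.
  eapply Rle_lt_trans. apply Cmod_triangle.
  specialize (H1 n ltac:(lia)). specialize (H2 n ltac:(lia)). lra.
Qed.

Lemma CL_scal c u a : CL u a -> CL (fun n => c * u n)%C (c * a)%C.
Proof.
  intros Hu eps He.
  destruct (Hu (eps / (Cmod c + 1))) as [N HN].
  { apply Rdiv_lt_0_compat; auto. pose proof (Cmod_ge_0 c); lra. }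
  exists N. intros n Hn. replace (c * u n - c * a)%C with (c * (u n - a))%C by ring.
  rewrite Cmod_mult. specialize (HN n Hn). pose proof (Cmod_ge_0 c).
  pose proof (Cmod_ge_0 (u n - a)%C).
  apply Rle_lt_trans with ((Cmod c + 1) * Cmod (u n - a)%C). nra.
  apply (Rmult_lt_compat_l (Cmod c + 1)) in HN; [|lra].
  replace ((Cmod c + 1) * (eps / (Cmod c + 1))) with eps in HN by (field; lra). lra.
Qed.

Lemma CL_minus u v a b : CL u a -> CL v b -> CL (fun n => u n - v n)%C (a - b)%C.
Proof.
  intros Hu Hv. apply (CL_ext (fun n => u n + (-1) * v n)%C). intros; ring.
  replace (a - b)%C with (a + (-1) * b)%C by ring. apply CL_plus; auto. apply CL_scal; auto.
Qed.

Lemma CL_parts u (a b : R) : is_lim_seq (fun n => fst (u n)) a -> is_lim_seq (fun n => snd (u n)) b ->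
  CL u (a, b).
Proof.
  intros Ha Hb eps He. apply is_lim_seq_spec in Ha. apply is_lim_seq_spec in Hb.
  destruct (Ha (mkposreal (eps/2) ltac:(lra))) as [N1 H1].
  destruct (Hb (mkposreal (eps/2) ltac:(lra))) as [N2 H2]. exists (N1 + N2)%nat.
  intros n Hn. eapply Rle_lt_trans. apply Cmod_le_sum.
  specialize (H1 n ltac:(lia)). specialize (H2 n ltac:(lia)). simpl in H1, H2.
  replace (fst (u n - (a,b))%C) with (fst (u n) - a) by (simpl; ring).
  replace (snd (u n - (a,b))%C) with (snd (u n) - b) by (simpl; ring). lra.
Qed.

Lemma CL_fst u l : CL u l -> is_lim_seq (fun n => fst (u n)) (fst l).
Proof.
  intros H. apply is_lim_seq_spec. intros eps. destruct (H eps (cond_pos eps)) as [N HN].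
  exists N. intros n Hn. eapply Rle_lt_trans. 2: apply (HN n Hn).
  replace (fst (u n) - fst l) with (fst (u n - l)%C) by (simpl; ring). apply Rabs_fst_le.
Qed.

Lemma CL_Cmod_le u l c : CL u l -> (exists N, forall n, (N <= n)%nat -> Cmod (u n) <= c) -> Cmod l <= c.
Proof.
  intros H [N HN]. apply Rnot_lt_le. intros Hc.
  destruct (H (Cmod l - c) ltac:(lra)) as [N1 H1].
  specialize (H1 (N + N1)%nat ltac:(lia)). specialize (HN (N + N1)%nat ltac:(lia)).
  pose proof (Cmod_triangle (u (N+N1)%nat) (-(u (N+N1)%nat - l))%C) as T.
  rewrite Cmod_opp in T. replace (u (N + N1)%nat + - (u (N + N1)%nat - l))%C with l in T by ring.
  lra.
Qed.

Lemma CL_filterlim u l : CL u l -> filterlim u eventually (@locally C_NormedModule l).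
Proof.
  intros H. apply filterlim_locally. intros eps. destruct (H eps (cond_pos eps)) as [N HN].
  exists N. intros n Hn. apply (@norm_compat1 C_AbsRing C_NormedModule). apply HN; auto.
Qed.

Lemma filterlim_CL u l : filterlim u eventually (@locally C_R_NormedModule l) -> CL u l.
Proof.
  intros H eps He. pose proof (proj1 (filterlim_locally u l) H (mkposreal (eps/2) ltac:(lra))) as H'.
  destruct H' as [N HN]. exists N. intros n Hn. specialize (HN n Hn).
  destruct HN as [B1 B2].
  change (Rabs (fst (u n) - fst l) < eps/2) in B1.
  change (Rabs (snd (u n) - snd l) < eps/2) in B2.
  eapply Rle_lt_trans. apply Cmod_le_sum.
  replace (fst (u n - l)%C) with (fst (u n) - fst l) by (simpl; ring).
  replace (snd (u n - l)%C) with (snd (u n) - snd l) by (simpl; ring). lra.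
Qed.

Definition csum (f : nat -> C) (N : nat) : C := @sum_n C_AbelianMonoid f N.

Lemma csum_0 f : csum f 0 = f 0%nat.
Proof. unfold csum. rewrite sum_O. reflexivity. Qed.
Lemma csum_S f N : csum f (S N) = (csum f N + f (S N))%C.
Proof. unfold csum. rewrite sum_Sn. reflexivity. Qed.

Lemma pow_n_Cpow (z : C) n : @pow_n C_Ring z n = Cpow z n.
Proof. induction n; simpl; auto. Qed.

Lemma csum_ext_le f g n : (forall i, (i <= n)%nat -> f i = g i) -> csum f n = csum g n.
Proof.
  induction n; intros H. rewrite !csum_0. apply H; lia.
  rewrite !csum_S. rewrite IHn by (intros; apply H; lia). rewrite H by lia. auto.
Qed.

Lemma fst_csum f N : fst (csum f N) = sum_f_R0 (fun j => fst (f j)) N.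
Proof. induction N. rewrite csum_0; auto. rewrite csum_S.
  change (fst (csum f N + f (S N))%C) with (fst (csum f N) + fst (f (S N))). rewrite IHN. auto. Qed.
Lemma snd_csum f N : snd (csum f N) = sum_f_R0 (fun j => snd (f j)) N.
Proof. induction N. rewrite csum_0; auto. rewrite csum_S.
  change (snd (csum f N + f (S N))%C) with (snd (csum f N) + snd (f (S N))). rewrite IHN. auto. Qed.

Lemma csum_RtoC_scal (f : nat -> R) (c : C) N :
  csum (fun i => RtoC (f i) * c)%C N = (RtoC (sum_f_R0 f N) * c)%C.
Proof.
  induction N. rewrite csum_0. auto. rewrite csum_S, IHN. simpl sum_f_R0.
  rewrite RtoC_plus. ring.
Qed.

Lemma csum_scal_l (c : C) f N : csum (fun i => c * f i)%C N = (c * csum f N)%C.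
Proof. induction N. rewrite !csum_0; auto. rewrite !csum_S, IHN. ring. Qed.

Lemma csum_plus f g N : csum (fun i => f i + g i)%C N = (csum f N + csum g N)%C.
Proof. induction N. rewrite !csum_0; auto. rewrite !csum_S, IHN. ring. Qed.

Lemma Cmod_csum_le f N : Cmod (csum f N) <= sum_f_R0 (fun j => Cmod (f j)) N.
Proof.
  induction N. rewrite csum_0; simpl; lra. rewrite csum_S.
  eapply Rle_trans. apply Cmod_triangle. simpl sum_f_R0. lra.
Qed.

Lemma sum_f_R0_mono (b : nat -> R) (hb : forall n, 0 <= b n) N k :
  sum_f_R0 b N <= sum_f_R0 b (N + k).
Proof. induction k. rewrite Nat.add_0_r; lra. rewrite Nat.add_succ_r. simpl. specialize (hb (S (N + k))). lra. Qed.

Lemma series_partial_le (b : nat -> R) A (hb : forall n, 0 <= b n) :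
  is_series b A -> forall N, sum_f_R0 b N <= A.
Proof.
  intros H N. apply Rnot_lt_le. intros Hc.
  destruct (is_series_R_eps b A H (sum_f_R0 b N - A) ltac:(lra)) as [M HM].
  specialize (HM (N + M)%nat ltac:(lia)). pose proof (sum_f_R0_mono b hb N M).
  apply Rabs_def2 in HM. lra.
Qed.

Lemma is_lim_to_series (a : nat -> R) (l : R) : is_lim_seq (sum_n a) l -> is_series a l.
Proof.
  intros H. apply is_lim_seq_spec in H. unfold is_lim_seq' in H. unfold is_series. apply filterlim_locally.
  intros eps. destruct (H eps) as [N HN]. exists N. intros n Hn. apply HN; auto.
Qed.

Lemma CL_snd u l : CL u l -> is_lim_seq (fun n => snd (u n)) (snd l).
Proof.
  intros H. apply is_lim_seq_spec. intros eps. destruct (H eps (cond_pos eps)) as [N HN].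
  exists N. intros n Hn. eapply Rle_lt_trans. 2: apply (HN n Hn).
  replace (snd (u n) - snd l) with (snd (u n - l)%C) by (simpl; ring). apply Rabs_snd_le.
Qed.

Lemma CL_series_fst u U : CL (csum u) U -> is_series (fun j => fst (u j)) (fst U).
Proof.
  intros H. apply is_lim_to_series. apply CL_fst in H.
  eapply is_lim_seq_ext. 2: exact H. intros n. cbv beta. rewrite fst_csum, sum_n_Reals. auto.
Qed.
Lemma CL_series_snd u U : CL (csum u) U -> is_series (fun j => snd (u j)) (snd U).
Proof.
  intros H. apply is_lim_to_series. apply CL_snd in H.
  eapply is_lim_seq_ext. 2: exact H. intros n. cbv beta. rewrite snd_csum, sum_n_Reals. auto.
Qed.

Lemma ex_series_fst_abs u : ex_series (fun j => Cmod (u j)) -> ex_series (fun j => Rabs (fst (u j))).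
Proof. intros H. eapply (@ex_series_le R_AbsRing R_CompleteNormedModule). 2: exact H. intros n. simpl. unfold norm; simpl.
  unfold abs; simpl. rewrite Rabs_Rabsolu. apply Rabs_fst_le. Qed.
Lemma ex_series_snd_abs u : ex_series (fun j => Cmod (u j)) -> ex_series (fun j => Rabs (snd (u j))).
Proof. intros H. eapply (@ex_series_le R_AbsRing R_CompleteNormedModule). 2: exact H. intros n. simpl. unfold norm; simpl.
  unfold abs; simpl. rewrite Rabs_Rabsolu. apply Rabs_snd_le. Qed.

Lemma sum_f_R0_pm f g n : sum_f_R0 f n + - sum_f_R0 g n = sum_f_R0 (fun i => f i + - g i) n.
Proof. induction n; simpl; [ring|rewrite <- IHn; ring]. Qed.
Lemma sum_f_R0_pp f g n : sum_f_R0 f n + sum_f_R0 g n = sum_f_R0 (fun i => f i + g i) n.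
Proof. induction n; simpl; [ring|rewrite <- IHn; ring]. Qed.

Lemma cauchy_C (u v : nat -> C) U V :
  ex_series (fun j => Cmod (u j)) -> ex_series (fun j => Cmod (v j)) ->
  CL (csum u) U -> CL (csum v) V ->
  CL (csum (fun n => csum (fun i => u i * v (n - i)%nat)%C n)) (U * V)%C.
Proof.
  intros Au Av Hu Hv.
  pose proof (CL_series_fst u U Hu) as Fu. pose proof (CL_series_snd u U Hu) as Su.
  pose proof (CL_series_fst v V Hv) as Fv. pose proof (CL_series_snd v V Hv) as Sv.
  pose proof (ex_series_fst_abs u Au) as AFu. pose proof (ex_series_snd_abs u Au) as ASu.
  pose proof (ex_series_fst_abs v Av) as AFv. pose proof (ex_series_snd_abs v Av) as ASv.
  pose proof (is_series_mult _ _ _ _ Fu Fv AFu AFv) as M1.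
  pose proof (is_series_mult _ _ _ _ Su Sv ASu ASv) as M2.
  pose proof (is_series_mult _ _ _ _ Fu Sv AFu ASv) as M3.
  pose proof (is_series_mult _ _ _ _ Su Fv ASu AFv) as M4.
  destruct U as [u1 u2]. destruct V as [v1 v2]. simpl in *.
  replace ((u1, u2) * (v1, v2))%C with (u1 * v1 - u2 * v2, u1 * v2 + u2 * v1) by reflexivity.
  apply CL_parts.
  - pose proof (is_series_minus _ _ _ _ M1 M2) as M.
    eapply is_lim_seq_ext. 2: apply (is_series_R_lim _ _ M). intros n. cbv beta.
    rewrite sum_n_Reals, fst_csum. apply sum_eq. intros j _.
    rewrite fst_csum. unfold minus, plus, opp; simpl.
    rewrite sum_f_R0_pm. apply sum_eq. intros i _. simpl. ring.
  - pose proof (is_series_plus _ _ _ _ M3 M4) as M.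
    eapply is_lim_seq_ext. 2: apply (is_series_R_lim _ _ M). intros n. cbv beta.
    rewrite sum_n_Reals, snd_csum. apply sum_eq. intros j _.
    rewrite snd_csum. unfold plus; simpl.
    rewrite sum_f_R0_pp. apply sum_eq. intros i _. simpl. ring.
Qed.

Lemma Cmod_term (a : R) (w : C) j : Cmod (RtoC a * @pow_n C_Ring w j)%C = Rabs a * Cmod w ^ j.
Proof. rewrite Cmod_mult, Cmod_R, pow_n_Cpow, Cmod_pow. auto. Qed.

Lemma pser_partial_csum a w N : pser_partial a w N = csum (fun j => RtoC (a j) * @pow_n C_Ring w j)%C N.
Proof. reflexivity. Qed.

Lemma pser_CL a w : ex_series (fun j => Rabs (a j) * Cmod w ^ j) -> CL (pser_partial a w) (pser a w).
Proof.
  intros H. set (u := fun j => (RtoC (a j) * @pow_n C_Ring w j)%C).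
  assert (Hu : ex_series (fun j => Cmod (u j))).
  { eapply ex_series_ext. 2: exact H. intros j. unfold u. rewrite Cmod_term. auto. }
  pose proof (ex_series_Rabs _ (ex_series_fst_abs u Hu)) as Ef.
  pose proof (ex_series_Rabs _ (ex_series_snd_abs u Hu)) as Es.
  pose proof (Series_correct _ Ef) as Sf. pose proof (Series_correct _ Es) as Ss.
  assert (Lf : is_lim_seq (fun N => fst (pser_partial a w N)) (Series (fun j => fst (u j)))).
  { eapply is_lim_seq_ext. 2: apply (is_series_R_lim _ _ Sf). intros n. cbv beta.
    rewrite sum_n_Reals, pser_partial_csum, fst_csum. auto. }
  assert (Ls : is_lim_seq (fun N => snd (pser_partial a w N)) (Series (fun j => snd (u j)))).
  { eapply is_lim_seq_ext. 2: apply (is_series_R_lim _ _ Ss). intros n. cbv beta.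
    rewrite sum_n_Reals, pser_partial_csum, snd_csum. auto. }
  replace (pser a w) with (Series (fun j => fst (u j)), Series (fun j => snd (u j))).
  - apply CL_parts; auto.
  - unfold pser. rewrite (is_lim_seq_unique _ _ Lf), (is_lim_seq_unique _ _ Ls). auto.
Qed.

Lemma pser_CL' a w A : (forall j, 0 <= a j) -> is_series (fun j => a j * Cmod w ^ j) A ->
  CL (pser_partial a w) (pser a w).
Proof.
  intros ha H. apply pser_CL. eapply ex_series_ext. 2: exists A; exact H.
  intros j. rewrite Rabs_pos_eq; auto.
Qed.

Lemma pser_bound a w A : (forall j, 0 <= a j) -> is_series (fun j => a j * Cmod w ^ j) A ->
  Cmod (pser a w) <= A.
Proof.
  intros ha H. apply (CL_Cmod_le (pser_partial a w)). apply (pser_CL' a w A ha H).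
  exists 0%nat. intros n _. rewrite pser_partial_csum. eapply Rle_trans. apply Cmod_csum_le.
  eapply Rle_trans. 2: apply (series_partial_le (fun j => a j * Cmod w ^ j) A); [|exact H].
  - right. apply sum_eq. intros i _. rewrite Cmod_term, Rabs_pos_eq; auto.
  - intros j. apply Rmult_le_pos; auto. apply pow_le, Cmod_ge_0.
Qed.

Lemma sum_pw0 a s N : sum_f_R0 (fun n => pw a 0 n * s ^ n) N = 1.
Proof. induction N. simpl. ring. change (sum_f_R0 (fun n => pw a 0 n * s ^ n) N + pw a 0 (S N) * s ^ S N = 1). rewrite IHN. simpl. ring. Qed.

Lemma pw_series a s A : (forall j, 0 <= a j) -> 0 <= s ->
  is_series (fun j => a j * s ^ j) A -> forall k, is_series (fun n => pw a k n * s ^ n) (A ^ k).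
Proof.
  intros ha hs H. induction k.
  - apply is_lim_to_series. eapply is_lim_seq_ext. 2: apply is_lim_seq_const.
    intros n. rewrite sum_n_Reals, sum_pw0. auto.
  - assert (Abs1 : ex_series (fun n => Rabs (a n * s ^ n))).
    { eapply ex_series_ext. 2: exists A; exact H. intros j.
      rewrite Rabs_pos_eq; auto. apply Rmult_le_pos; auto. apply pow_le; auto. }
    assert (Abs2 : ex_series (fun n => Rabs (pw a k n * s ^ n))).
    { eapply ex_series_ext. 2: exists (A ^ k); exact IHk. intros j.
      rewrite Rabs_pos_eq; auto. apply Rmult_le_pos; auto. apply pw_nonneg; auto. apply pow_le; auto. }
    pose proof (is_series_mult _ _ _ _ H IHk Abs1 Abs2) as M.
    eapply is_series_ext. 2: exact M. intros n. simpl pw.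
    cbv beta. symmetry. rewrite Rmult_comm, scal_sum. apply sum_eq. intros i Hi.
    replace (s ^ n) with (s ^ i * s ^ (n - i)) by (rewrite <- pow_add; f_equal; lia). ring.
Qed.

Lemma pw_CL a w A : (forall j, 0 <= a j) -> is_series (fun j => a j * Cmod w ^ j) A ->
  forall k, CL (csum (fun n => RtoC (pw a k n) * @pow_n C_Ring w n)%C) (Cpow (pser a w) k).
Proof.
  intros ha H. pose proof (pw_series a (Cmod w) A ha (Cmod_ge_0 w) H) as PS.
  induction k.
  - simpl Cpow. eapply CL_ext. 2: apply CL_const. intros N. induction N.
    + rewrite csum_0, pow_n_Cpow. simpl. ring.
    + rewrite csum_S, <- IHN, pow_n_Cpow. simpl pw. ring.
  - assert (Au : ex_series (fun j => Cmod (RtoC (a j) * @pow_n C_Ring w j)%C)).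
    { eapply ex_series_ext. 2: exists A; exact H. intros j. rewrite Cmod_term, Rabs_pos_eq; auto. }
    assert (Av : ex_series (fun j => Cmod (RtoC (pw a k j) * @pow_n C_Ring w j)%C)).
    { eapply ex_series_ext. 2: exists (A ^ k); exact (PS k). intros j.
      rewrite Cmod_term, Rabs_pos_eq; auto. apply pw_nonneg; auto. }
    pose proof (cauchy_C _ _ _ _ Au Av (pser_CL' a w A ha H) IHk) as M.
    simpl Cpow. eapply CL_ext. 2: exact M. intros N. cbv beta.
    apply csum_ext_le. intros n _.
    transitivity (csum (fun i => RtoC (a i * pw a k (n - i)) * @pow_n C_Ring w n)%C n).
    + apply csum_ext_le. intros i Hi. rewrite RtoC_mult.
      rewrite (pow_n_Cpow w i), (pow_n_Cpow w (n-i)), (pow_n_Cpow w n).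
      replace (Cpow w n) with (Cpow w i * Cpow w (n - i))%C.
      2:{ rewrite <- Cpow_add_r. f_equal. lia. }
      ring.
    + rewrite csum_RtoC_scal. reflexivity.
Qed.

Definition isR (f : R -> C) (l : C) : Prop :=
  @is_RInt C_R_NormedModule f 0 (2 * PI) l.

Lemma isR_RInt f : @ex_RInt C_R_CompleteNormedModule f 0 (2 * PI) ->
  isR f (@RInt C_R_CompleteNormedModule f 0 (2 * PI)).
Proof. intros H. apply (RInt_correct (V := C_R_CompleteNormedModule)). auto. Qed.

Lemma isR_ex f l : isR f l -> @ex_RInt C_R_CompleteNormedModule f 0 (2 * PI).
Proof. intros H. exists l. exact H. Qed.

Lemma isR_unique f l : isR f l -> @RInt C_R_CompleteNormedModule f 0 (2 * PI) = l.
Proof. intros H. apply (is_RInt_unique (V := C_R_CompleteNormedModule)). exact H. Qed.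

Lemma isR_ext f g l : (forall x, f x = g x) -> isR f l -> isR g l.
Proof. intros E H. unfold isR. eapply is_RInt_ext. 2: exact H. intros; auto. Qed.

Lemma isR_plus f g a b : isR f a -> isR g b -> isR (fun x => f x + g x)%C (a + b)%C.
Proof. intros Hf Hg. unfold isR. apply (is_RInt_plus f g 0 (2*PI) a b Hf Hg). Qed.

Lemma isR_fst f l : isR f l -> is_RInt (fun x => fst (f x)) 0 (2*PI) (fst l).
Proof. intros H. apply (is_RInt_fct_extend_fst (U := R_NormedModule) (V := R_NormedModule) f 0 (2*PI) l H). Qed.
Lemma isR_snd f l : isR f l -> is_RInt (fun x => snd (f x)) 0 (2*PI) (snd l).
Proof. intros H. apply (is_RInt_fct_extend_snd (U := R_NormedModule) (V := R_NormedModule) f 0 (2*PI) l H). Qed.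
Lemma isR_pair f (a b : R) : is_RInt (fun x => fst (f x)) 0 (2*PI) a ->
  is_RInt (fun x => snd (f x)) 0 (2*PI) b -> isR f (a, b).
Proof. intros H1 H2. apply (is_RInt_fct_extend_pair (U := R_NormedModule) (V := R_NormedModule) f 0 (2*PI) a b H1 H2). Qed.

Lemma isR_cmul c f l : isR f l -> isR (fun x => c * f x)%C (c * l)%C.
Proof.
  intros H. pose proof (isR_fst f l H) as H1. pose proof (isR_snd f l H) as H2.
  destruct c as [c1 c2].
  replace ((c1, c2) * l)%C with (c1 * fst l - c2 * snd l, c1 * snd l + c2 * fst l).
  2:{ destruct l; reflexivity. }
  apply isR_pair.
  - pose proof (is_RInt_minus _ _ _ _ _ _ (is_RInt_scal _ _ _ c1 _ H1) (is_RInt_scal _ _ _ c2 _ H2)) as M.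
    eapply is_RInt_ext. 2: exact M. intros x _. reflexivity.
  - pose proof (is_RInt_plus _ _ _ _ _ _ (is_RInt_scal _ _ _ c1 _ H2) (is_RInt_scal _ _ _ c2 _ H1)) as M.
    eapply is_RInt_ext. 2: exact M. intros x _. reflexivity.
Qed.

Lemma norm_CR (z : C) : @norm R_AbsRing C_R_NormedModule z = Cmod z.
Proof.
  unfold norm. simpl. unfold prod_norm, Cmod.
  change (sqrt (Rabs (fst z) ^ 2 + Rabs (snd z) ^ 2) = sqrt (fst z ^ 2 + snd z ^ 2)).
  rewrite !pow2_abs. reflexivity.
Qed.

Lemma isR_bound f l M : isR f l -> (forall x, 0 <= x <= 2 * PI -> Cmod (f x) <= M) ->
  Cmod l <= 2 * PI * M.
Proof.
  intros H HM. rewrite <- norm_CR.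
  pose proof PI_RGT_0.
  replace (2 * PI * M) with (scal (2 * PI - 0) M) by (unfold scal; simpl; unfold mult; simpl; ring).
  apply (norm_RInt_le f (fun _ => M) 0 (2 * PI) l (scal (2 * PI - 0) M)).
  - lra.
  - intros x Hx. rewrite norm_CR. auto.
  - exact H.
  - apply (@is_RInt_const R_NormedModule).
Qed.

Fixpoint OnT (rs : list R) (ts : list C) : Prop :=
  match rs, ts with
  | [], [] => True
  | r :: rs', t :: ts' => (exists th, t = circ r th) /\ OnT rs' ts'
  | _, _ => False
  end.

Fixpoint Integ (rs : list R) (F : list C -> C) : Prop :=
  match rs with
  | [] => True
  | r :: rs' => (forall th, Integ rs' (fun ts => F (circ r th :: ts))) /\
      @ex_RInt C_R_CompleteNormedModule
        (fun th => Cmult (iter_contour rs' (fun ts => F (circ r th :: ts))) (circ' r th)) 0 (2 * PI)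
  end.

Fixpoint Kc (rs : list R) : R :=
  match rs with [] => 1 | r :: rs' => 2 * PI * Rabs r * Kc rs' end.

Lemma Kc_pos rs : 0 <= Kc rs.
Proof. induction rs; simpl. lra. pose proof PI_RGT_0. pose proof (Rabs_pos a).
  apply Rmult_le_pos; auto. nra. Qed.

Lemma iter_cons r rs F : iter_contour (r :: rs) F =
  @RInt C_R_CompleteNormedModule
    (fun th => Cmult (iter_contour rs (fun ts => F (circ r th :: ts))) (circ' r th)) 0 (2 * PI).
Proof. reflexivity. Qed.

Lemma iter_ext rs : forall F G, (forall ts, OnT rs ts -> F ts = G ts) ->
  iter_contour rs F = iter_contour rs G.
Proof.
  induction rs as [|r rs IH]; intros F G H.
  - simpl. apply H. simpl. auto.
  - rewrite !iter_cons. f_equal. apply functional_extensionality. intros th.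
    f_equal. apply IH. intros ts Hts. apply H. simpl. split; eauto.
Qed.

Lemma Integ_ext rs : forall F G, (forall ts, OnT rs ts -> F ts = G ts) ->
  Integ rs F -> Integ rs G.
Proof.
  induction rs as [|r rs IH]; intros F G H HF. simpl; auto.
  destruct HF as [HF1 HF2]. split.
  - intros th. apply (IH _ _ (fun ts Hts => H (circ r th :: ts) (conj (ex_intro _ th eq_refl) Hts))).
    apply HF1.
  - destruct HF2 as [I HI]. exists I. eapply is_RInt_ext. 2: exact HI.
    intros x _. cbv beta. f_equal. apply iter_ext. intros ts Hts. apply H. simpl. split; eauto.
Qed.

Lemma Integ_plus rs : forall F G, Integ rs F -> Integ rs G ->
  Integ rs (fun ts => F ts + G ts)%C /\
  iter_contour rs (fun ts => F ts + G ts)%C = (iter_contour rs F + iter_contour rs G)%C.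
Proof.
  induction rs as [|r rs IH]; intros F G HF HG. simpl; auto.
  destruct HF as [HF1 HF2]. destruct HG as [HG1 HG2].
  assert (E : forall th, iter_contour rs (fun ts => F (circ r th :: ts) + G (circ r th :: ts))%C =
     (iter_contour rs (fun ts => F (circ r th :: ts)) + iter_contour rs (fun ts => G (circ r th :: ts)))%C).
  { intros th. apply (IH _ _ (HF1 th) (HG1 th)). }
  pose proof (isR_plus _ _ _ _ (isR_RInt _ HF2) (isR_RInt _ HG2)) as P.
  assert (P' : isR (fun th => Cmult (iter_contour rs (fun ts => F (circ r th :: ts) + G (circ r th :: ts))%C) (circ' r th))
      (iter_contour (r :: rs) F + iter_contour (r :: rs) G)%C).
  { eapply isR_ext. 2: exact P. intros th. simpl. rewrite E. ring. }
  split.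
  - split. intros th. apply (IH _ _ (HF1 th) (HG1 th)). eapply isR_ex. exact P'.
  - rewrite iter_cons. apply isR_unique. exact P'.
Qed.

Lemma Integ_cmul rs : forall (c : C) F, Integ rs F ->
  Integ rs (fun ts => c * F ts)%C /\
  iter_contour rs (fun ts => c * F ts)%C = (c * iter_contour rs F)%C.
Proof.
  induction rs as [|r rs IH]; intros c F HF. simpl; auto.
  destruct HF as [HF1 HF2].
  pose proof (isR_cmul c _ _ (isR_RInt _ HF2)) as P.
  assert (P' : isR (fun th => Cmult (iter_contour rs (fun ts => c * F (circ r th :: ts))%C) (circ' r th))
      (c * iter_contour (r :: rs) F)%C).
  { eapply isR_ext. 2: exact P. intros th. simpl. rewrite (proj2 (IH c _ (HF1 th))). ring. }
  split.
  - split. intros th. apply (IH _ _ (HF1 th)). eapply isR_ex. exact P'.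
  - rewrite iter_cons. apply isR_unique. exact P'.
Qed.

Lemma Integ_minus rs F G : Integ rs F -> Integ rs G ->
  Integ rs (fun ts => F ts - G ts)%C /\
  iter_contour rs (fun ts => F ts - G ts)%C = (iter_contour rs F - iter_contour rs G)%C.
Proof.
  intros HF HG. destruct (Integ_cmul rs (-1)%C G HG) as [A1 A2].
  destruct (Integ_plus rs F _ HF A1) as [B1 B2].
  split.
  - eapply Integ_ext. 2: exact B1. intros; simpl; ring.
  - rewrite (iter_ext rs _ (fun ts => F ts + (-1) * G ts)%C). rewrite B2, A2. ring.
    intros; ring.
Qed.

Lemma Cmod_circ' r th : Cmod (circ' r th) = Rabs r.
Proof.
  unfold Cmod, circ'. simpl. rewrite <- sqrt_Rsqr_abs. f_equal. unfold Rsqr.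
  pose proof (sin2_cos2 th). unfold Rsqr in H. nra.
Qed.

Lemma Integ_bound rs : forall F e, Integ rs F -> (forall ts, OnT rs ts -> Cmod (F ts) <= e) ->
  Cmod (iter_contour rs F) <= Kc rs * e.
Proof.
  induction rs as [|r rs IH]; intros F e HF H.
  - simpl. rewrite Rmult_1_l. apply H. simpl; auto.
  - destruct HF as [HF1 HF2]. rewrite iter_cons. simpl Kc.
    replace (2 * PI * Rabs r * Kc rs * e) with (2 * PI * (Kc rs * e * Rabs r)) by ring.
    apply (isR_bound _ _ _ (isR_RInt _ HF2)). intros x _.
    rewrite Cmod_mult, Cmod_circ'. apply Rmult_le_compat_r. apply Rabs_pos.
    apply IH. apply HF1. intros ts Hts. apply H. simpl. split; eauto.
Qed.

Definition UC (rs : list R) (F : nat -> list C -> C) (G : list C -> C) : Prop :=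
  forall eps, 0 < eps -> exists N0, forall N, (N0 <= N)%nat -> forall ts, OnT rs ts ->
    Cmod (F N ts - G ts)%C <= eps.

Lemma Integ_limit rs : forall F G, (forall N, Integ rs (F N)) -> UC rs F G ->
  Integ rs G /\ CL (fun N => iter_contour rs (F N)) (iter_contour rs G).
Proof.
  induction rs as [|r rs IH]; intros F G HF HU.
  - split. simpl; auto. intros eps He. destruct (HU (eps/2) ltac:(lra)) as [N0 HN0].
    exists N0. intros n Hn. simpl. specialize (HN0 n Hn [] I). lra.
  - assert (Hin : forall th, Integ rs (fun ts => G (circ r th :: ts)) /\
        CL (fun N => iter_contour rs (fun ts => F N (circ r th :: ts)))
           (iter_contour rs (fun ts => G (circ r th :: ts)))).
    { intros th. apply IH. intros N. apply (HF N). intros eps He.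
      destruct (HU eps He) as [N0 HN0]. exists N0. intros N HN ts Hts.
      apply HN0; auto. simpl. split; eauto. }
    set (h := fun N th => Cmult (iter_contour rs (fun ts => F N (circ r th :: ts))) (circ' r th)).
    set (g := fun th => Cmult (iter_contour rs (fun ts => G (circ r th :: ts))) (circ' r th)).
    assert (Hh : forall N, @is_RInt C_R_CompleteNormedModule (h N) 0 (2 * PI) (iter_contour (r :: rs) (F N))).
    { intros N. apply (isR_RInt (h N)). apply (HF N). }
    assert (Hlim : filterlim h eventually (@locally (fct_UniformSpace R C_R_CompleteNormedModule) g)).
    { apply filterlim_locally. intros eps.
      set (e' := eps / (2 * (Kc rs * Rabs r + 1))).
      assert (He' : 0 < e').
      { unfold e'. apply Rdiv_lt_0_compat. apply cond_pos. pose proof (Kc_pos rs).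
        pose proof (Rabs_pos r). nra. }
      destruct (HU e' He') as [N0 HN0]. exists N0. intros N HN th.
      apply (@norm_compat1 R_AbsRing C_R_NormedModule). rewrite norm_CR.
      change (Cmod (h N th - g th)%C < eps).
      unfold h, g. replace (iter_contour rs (fun ts => F N (circ r th :: ts)) * circ' r th -
         iter_contour rs (fun ts => G (circ r th :: ts)) * circ' r th)%C with
         ((iter_contour rs (fun ts => F N (circ r th :: ts)) -
         iter_contour rs (fun ts => G (circ r th :: ts))) * circ' r th)%C by ring.
      rewrite Cmod_mult, Cmod_circ'.
      destruct (Integ_minus rs _ _ (proj1 (HF N) th) (proj1 (Hin th))) as [M1 M2].
      rewrite <- M2.
      assert (B : Cmod (iter_contour rs (fun ts => F N (circ r th :: ts) - G (circ r th :: ts))%C) <= Kc rs * e').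
      { apply Integ_bound. auto. intros ts Hts. apply HN0; auto. simpl. split; eauto. }
      pose proof (Kc_pos rs). pose proof (Rabs_pos r).
      pose proof (Cmod_ge_0 (iter_contour rs (fun ts => F N (circ r th :: ts) - G (circ r th :: ts))%C)).
      apply Rle_lt_trans with (Kc rs * e' * Rabs r). apply Rmult_le_compat_r; auto.
      pose proof (cond_pos eps).
      replace (Kc rs * e' * Rabs r) with (eps/2 - e') by (unfold e'; field; nra). lra. }
    destruct (@filterlim_RInt nat C_R_CompleteNormedModule h 0 (2 * PI) eventually _ g _ Hh Hlim) as [If [L1 L2]].
    assert (IG : iter_contour (r :: rs) G = If).
    { rewrite iter_cons. apply (isR_unique g If L2). }
    split.
    + split. intros th. apply Hin. exists If. exact L2.
    + rewrite IG. apply filterlim_CL. exact L1.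
Qed.

Lemma circ_mult a b x y : (circ a x * circ b y)%C = circ (a * b) (x + y).
Proof. unfold circ, Cmult; simpl. rewrite cos_plus, sin_plus. f_equal; ring. Qed.

Lemma circ_pow a x n : Cpow (circ a x) n = circ (a ^ n) (INR n * x).
Proof.
  induction n. simpl. unfold circ. rewrite Rmult_0_l, cos_0, sin_0. apply injective_projections; simpl; ring.
  simpl Cpow. rewrite IHn, circ_mult. rewrite S_INR. f_equal; simpl; ring.
Qed.

Lemma circ_inv a x : a <> 0 -> (/ circ a x)%C = circ (/ a) (- x).
Proof.
  intros Ha. unfold circ, Cinv; simpl. rewrite cos_neg, sin_neg.
  pose proof (sin2_cos2 x) as S. unfold Rsqr in S.
  replace (a * cos x * (a * cos x * 1) + a * sin x * (a * sin x * 1)) with (a * a) by nra.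
  f_equal; field; auto.
Qed.

Lemma circ'_eq a x : circ' a x = (Ci * circ a x)%C.
Proof. unfold circ', circ, Ci, Cmult; simpl. f_equal; ring. Qed.

Lemma cos_sin_int (n j : nat) :
  cos (2 * PI * (INR n - INR j)) = 1 /\ sin (2 * PI * (INR n - INR j)) = 0.
Proof.
  destruct (Compare_dec.le_lt_dec j n) as [Hle|Hlt].
  - rewrite <- minus_INR by auto.
    pose proof (cos_period 0 (n - j)) as A. pose proof (sin_period 0 (n - j)) as B.
    rewrite Rplus_0_l, cos_0 in A. rewrite Rplus_0_l, sin_0 in B.
    replace (2 * PI * INR (n - j)) with (2 * INR (n - j) * PI) by ring. auto.
  - replace (INR n - INR j) with (- INR (j - n)) by (rewrite minus_INR by lia; ring).
    pose proof (cos_period 0 (j - n)) as A. pose proof (sin_period 0 (j - n)) as B.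
    rewrite Rplus_0_l, cos_0 in A. rewrite Rplus_0_l, sin_0 in B.
    replace (2 * PI * - INR (j - n)) with (- (2 * INR (j - n) * PI)) by ring.
    rewrite cos_neg, sin_neg, A, B. split; ring.
Qed.

Lemma isR_wave (c a : R) : a <> 0 -> cos (2 * PI * a) = 1 -> sin (2 * PI * a) = 0 ->
  isR (fun th => (Ci * circ c (a * th))%C) 0%C.
Proof.
  intros Ha Hc Hs.
  change (RtoC 0) with ((0, 0) : C).
  apply isR_pair.
  - assert (D : is_RInt (fun th => - (c * sin (a * th))) 0 (2 * PI)
        (minus ((fun th => c * cos (a * th) / a) (2 * PI)) ((fun th => c * cos (a * th) / a) 0))).
    { apply (@is_RInt_derive R_CompleteNormedModule (fun th => c * cos (a * th) / a) (fun th => - (c * sin (a * th)))).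
      - intros x _. auto_derive. auto. field. auto.
      - intros x _. apply (@ex_derive_continuous R_AbsRing R_NormedModule). auto_derive. auto. }
    cbv beta in D.
    replace (minus (c * cos (a * (2 * PI)) / a) (c * cos (a * 0) / a)) with 0 in D.
    + eapply is_RInt_ext. 2: exact D. intros x _. unfold circ, Ci, Cmult; simpl. ring.
    + unfold minus, plus, opp; simpl. rewrite Rmult_0_r, cos_0.
      replace (a * (2 * PI)) with (2 * PI * a) by ring. rewrite Hc. field. auto.
  - assert (D : is_RInt (fun th => c * cos (a * th)) 0 (2 * PI)
        (minus ((fun th => c * sin (a * th) / a) (2 * PI)) ((fun th => c * sin (a * th) / a) 0))).
    { apply (@is_RInt_derive R_CompleteNormedModule (fun th => c * sin (a * th) / a) (fun th => c * cos (a * th))).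
      - intros x _. auto_derive. auto. field. auto.
      - intros x _. apply (@ex_derive_continuous R_AbsRing R_NormedModule). auto_derive. auto. }
    cbv beta in D.
    replace (minus (c * sin (a * (2 * PI)) / a) (c * sin (a * 0) / a)) with 0 in D.
    + eapply is_RInt_ext. 2: exact D. intros x _. unfold circ, Ci, Cmult; simpl. ring.
    + unfold minus, plus, opp; simpl. rewrite Rmult_0_r, sin_0.
      replace (a * (2 * PI)) with (2 * PI * a) by ring. rewrite Hs. field. auto.
Qed.

Lemma isR_const (v : C) : isR (fun _ => v) (RtoC (2 * PI) * v)%C.
Proof.
  pose proof (@is_RInt_const C_R_NormedModule 0 (2 * PI) v) as H.
  replace (RtoC (2 * PI) * v)%C with (scal (2 * PI - 0) v). exact H.
  destruct v. unfold scal; simpl. unfold prod_scal; simpl. unfold scal; simpl. unfold mult; simpl.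
  unfold RtoC, Cmult; simpl. f_equal; ring.
Qed.

Definition mono (n j : nat) (t : C) : C := (Cpow t n * Cpow (/ t) j * / t)%C.

Lemma isR_mono (rho : R) (n j : nat) : 0 < rho ->
  isR (fun th => mono n j (circ rho th) * circ' rho th)%C
      (if Nat.eqb n j then (RtoC (2 * PI) * Ci)%C else 0%C).
Proof.
  intros Hr.
  assert (E : forall th, (mono n j (circ rho th) * circ' rho th)%C =
     (Ci * circ (rho ^ n * (/ rho) ^ j) ((INR n - INR j) * th))%C).
  { intros th. unfold mono. rewrite circ_inv by lra. rewrite !circ_pow, circ'_eq.
    replace (circ (rho ^ n) (INR n * th) * circ ((/ rho) ^ j) (INR j * - th) * circ (/ rho) (- th) *
       (Ci * circ rho th))%C with
     (Ci * ((circ (rho ^ n) (INR n * th) * circ ((/ rho) ^ j) (INR j * - th)) * (circ (/ rho) (- th) * circ rho th)))%C by ring.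
    rewrite !circ_mult. f_equal. f_equal. field. lra. ring. }
  destruct (Nat.eqb_spec n j) as [Hnj|Hnj].
  - subst j. eapply isR_ext. 2: apply isR_const. intros th. simpl. rewrite E.
    rewrite Rminus_diag, Rmult_0_l, <- Rpow_mult_distr, Rinv_r, pow1 by lra.
    unfold circ. rewrite cos_0, sin_0. unfold Ci, Cmult; simpl.
    apply injective_projections; simpl; ring.
  - eapply isR_ext. 2: apply isR_wave.
    + intros th. simpl. rewrite E. reflexivity.
    + intros Hc. apply Hnj. apply INR_eq. lra.
    + apply cos_sin_int.
    + apply cos_sin_int.
Qed.

Lemma csum_diff_le (u : nat -> C) (b : nat -> R) (H : forall j, Cmod (u j) <= b j) J d :
  Cmod (csum u (J + d) - csum u J)%C <= sum_f_R0 b (J + d) - sum_f_R0 b J.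
Proof.
  induction d.
  - rewrite Nat.add_0_r. replace (csum u J - csum u J)%C with (RtoC 0) by ring. rewrite Cmod_0. lra.
  - rewrite Nat.add_succ_r, csum_S.
    replace (csum u (J + d) + u (S (J + d)) - csum u J)%C with
      ((csum u (J + d) - csum u J) + u (S (J + d)))%C by ring.
    eapply Rle_trans. apply Cmod_triangle. simpl sum_f_R0 at 1. specialize (H (S (J + d))). lra.
Qed.

Lemma CL_tail (u : nat -> C) (b : nat -> R) B U :
  (forall j, Cmod (u j) <= b j) -> is_series b B -> CL (csum u) U ->
  forall J, Cmod (U - csum u J)%C <= B - sum_f_R0 b J.
Proof.
  intros Hb HB HU J.
  assert (Hb0 : forall j, 0 <= b j). { intros j. eapply Rle_trans. apply Cmod_ge_0. apply Hb. }
  apply (CL_Cmod_le (fun M => csum u M - csum u J)%C).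
  - apply CL_minus. auto. apply CL_const.
  - exists J. intros n Hn. replace n with (J + (n - J))%nat by lia.
    eapply Rle_trans. apply csum_diff_le. auto.
    pose proof (series_partial_le b B Hb0 HB (J + (n - J))). lra.
Qed.

Lemma UC_mtest rs (u : list C -> nat -> C) (L : list C -> C) (b : nat -> R) B :
  is_series b B -> (forall ts j, OnT rs ts -> Cmod (u ts j) <= b j) ->
  (forall ts, OnT rs ts -> CL (csum (u ts)) (L ts)) ->
  UC rs (fun J ts => csum (u ts) J) L.
Proof.
  intros HB Hb HL eps He. destruct (is_series_R_eps b B HB eps He) as [N HN].
  exists N. intros J HJ ts Hts.
  rewrite <- Cmod_opp. replace (- (csum (u ts) J - L ts))%C with (L ts - csum (u ts) J)%C by ring.
  eapply Rle_trans. apply (CL_tail (u ts) b B); auto. specialize (HN J HJ).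
  apply Rabs_def2 in HN. lra.
Qed.

Lemma Integ_sep r rs F g Jg : Integ rs F -> isR (fun th => g (circ r th) * circ' r th)%C Jg ->
  Integ (r :: rs) (fun ts => g (hd (RtoC 0) ts) * F (tl ts))%C /\
  iter_contour (r :: rs) (fun ts => g (hd (RtoC 0) ts) * F (tl ts))%C = (Jg * iter_contour rs F)%C.
Proof.
  intros HF Hg.
  pose proof (isR_cmul (iter_contour rs F) _ _ Hg) as P.
  assert (P' : isR (fun th => Cmult (iter_contour rs (fun ts => g (hd (RtoC 0) (circ r th :: ts)) * F (tl (circ r th :: ts)))%C) (circ' r th))
     (iter_contour rs F * Jg)%C).
  { eapply isR_ext. 2: exact P. intros th. simpl.
    rewrite (proj2 (Integ_cmul rs (g (circ r th)) F HF)). ring. }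
  split.
  - split. intros th. apply (Integ_cmul rs (g (circ r th)) F HF). eapply isR_ex. exact P'.
  - rewrite iter_cons. rewrite (isR_unique _ _ P'). ring.
Qed.

Fixpoint prodI (h : nat -> C -> C) (s : nat) (ts : list C) : C :=
  match ts with [] => 1%C | t :: ts' => (h s t * prodI h (S s) ts')%C end.

Lemma Integ_prodI (r : nat -> R) (h : nat -> C -> C) (J : nat -> C) L : forall a,
  (forall i, (a <= i < a + L)%nat -> isR (fun th => h i (circ (r i) th) * circ' (r i) th)%C (J i)) ->
  Integ (map r (seq a L)) (prodI h a) /\
  iter_contour (map r (seq a L)) (prodI h a) = Cprod (map J (seq a L)).
Proof.
  induction L; intros a H.
  - simpl. split; auto.
  - destruct (IHL (S a)) as [I1 I2]. { intros i Hi. apply H. lia. }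
    destruct (Integ_sep (r a) _ _ (h a) (J a) I1) as [S1 S2]. { apply H. lia. }
    simpl seq. simpl map. split.
    + eapply Integ_ext. 2: exact S1. intros ts Hts. destruct ts. destruct Hts. reflexivity.
    + rewrite (iter_ext _ _ (fun ts => h a (hd (RtoC 0) ts) * prodI h (S a) (tl ts))%C).
      rewrite S2, I2. reflexivity.
      intros ts Hts. destruct ts. destruct Hts. reflexivity.
Qed.

Lemma prodI_bound (r : nat -> R) (h : nat -> C -> C) (beta : nat -> R) L : forall a ts,
  OnT (map r (seq a L)) ts ->
  (forall i th, (a <= i < a + L)%nat -> Cmod (h i (circ (r i) th)) <= beta i) ->
  Cmod (prodI h a ts) <= Rprod (map beta (seq a L)).
Proof.
  induction L; intros a ts Hts H.
  - destruct ts; [|destruct Hts]. simpl. rewrite Cmod_1. unfold Rprod; simpl; lra.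
  - destruct ts as [|t ts]. destruct Hts. destruct Hts as [[th Ht] Hts]. subst t.
    simpl. unfold Rprod at 1. simpl. fold (Rprod (map beta (seq (S a) L))).
    rewrite Cmod_mult. apply Rmult_le_compat.
    apply Cmod_ge_0. apply Cmod_ge_0. apply H. lia.
    apply IHL; auto. intros i th' Hi. apply H. lia.
Qed.

Lemma single_isR rho f : Integ [rho] (fun ts => f (hd (RtoC 0) ts)) ->
  isR (fun th => f (circ rho th) * circ' rho th)%C (iter_contour [rho] (fun ts => f (hd (RtoC 0) ts))).
Proof. intros [_ H]. apply (isR_RInt _ H). Qed.

Lemma Cprod_map_nth (g : nat -> C -> C) : forall ts s,
  Cprod (map (fun j => g (s + j)%nat (nth j ts (RtoC 1))) (seq 0 (length ts))) = prodI g s ts.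
Proof.
  induction ts as [|t ts IH]; intros s. reflexivity.
  simpl length. cbn [seq map]. rewrite <- seq_shift, map_map.
  unfold Cprod. cbn [fold_right]. simpl prodI. rewrite Nat.add_0_r. f_equal.
  rewrite <- (IH (S s)). unfold Cprod. f_equal. apply map_ext. intros j.
  simpl. f_equal. lia.
Qed.

Lemma OnT_length rs : forall ts, OnT rs ts -> length ts = length rs.
Proof. induction rs; intros ts H; destruct ts; simpl in *; try tauto. destruct H. f_equal; auto. Qed.

Lemma Cmod_circ r th : 0 <= r -> Cmod (circ r th) = r.
Proof.
  intros Hr. unfold Cmod, circ. simpl.
  pose proof (sin2_cos2 th). unfold Rsqr in H.
  apply sqrt_lem_1; auto. nra.
  transitivity (r * r * (sin th * sin th + cos th * cos th)). rewrite H. ring. ring.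
Qed.

Lemma circ_neq0 r th : 0 < r -> circ r th <> 0%C.
Proof. intros Hr E. pose proof (Cmod_circ r th ltac:(lra)). rewrite E, Cmod_0 in H. lra. Qed.

Lemma Cmod_Cprod_T rs : forall ts, OnT rs ts -> (forall x, In x rs -> 0 < x) ->
  Cmod (Cprod ts) = fold_right Rmult 1 rs.
Proof.
  induction rs; intros ts H Hp; destruct ts; simpl in *; try tauto.
  - apply Cmod_1.
  - destruct H as [[th E] H]. subst c. unfold Cprod in *. simpl. rewrite Cmod_mult, Cmod_circ, IHrs; auto.
    apply Rlt_le. auto.
Qed.

Lemma Cmod_Cprod_inv_T rs : forall ts, OnT rs ts -> (forall x, In x rs -> 0 < x) ->
  Cmod (Cprod (map Cinv ts)) = fold_right Rmult 1 (map Rinv rs).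
Proof.
  induction rs; intros ts H Hp; destruct ts; simpl in *; try tauto.
  - apply Cmod_1.
  - destruct H as [[th E] H]. subst c. unfold Cprod in *. simpl. rewrite Cmod_mult, Cmod_inv, Cmod_circ, IHrs; auto.
    apply Rlt_le. auto. apply circ_neq0. auto.
Qed.

Lemma prodI_split (n k : nat) (g : nat -> C -> C) : forall ts s,
  prodI (fun i t => Cpow t n * Cpow (g i t) k * / t)%C s ts =
  (Cpow (Cprod ts) n * Cpow (Cprod (map (fun j => g (s + j)%nat (nth j ts (RtoC 1))) (seq 0 (length ts)))) k
    * Cprod (map Cinv ts))%C.
Proof.
  intros ts s. rewrite Cprod_map_nth. revert s. induction ts as [|t ts IH]; intros s.
  - simpl. unfold Cprod; simpl. rewrite !Cpow_1_l. ring.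
  - simpl prodI. rewrite IH. unfold Cprod; simpl. fold (Cprod ts). fold (Cprod (map Cinv ts)).
    rewrite !Cpow_mult_l. ring.
Qed.

Lemma Integ_csum rs (G : nat -> list C -> C) (HG : forall j, Integ rs (G j)) J :
  Integ rs (fun ts => csum (fun j => G j ts) J) /\
  iter_contour rs (fun ts => csum (fun j => G j ts) J) = csum (fun j => iter_contour rs (G j)) J.
Proof.
  induction J.
  - rewrite csum_0. split.
    + eapply Integ_ext. 2: apply (HG 0%nat). intros. rewrite csum_0. auto.
    + apply iter_ext. intros. rewrite csum_0. auto.
  - destruct IHJ as [I1 I2]. destruct (Integ_plus rs _ _ I1 (HG (S J))) as [P1 P2].
    split.
    + eapply Integ_ext. 2: exact P1. intros. rewrite csum_S. auto.
    + rewrite (iter_ext _ _ (fun ts => csum (fun j => G j ts) J + G (S J) ts)%C).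
      rewrite P2, I2, csum_S. auto. intros; rewrite csum_S; auto.
Qed.

Lemma Integ_mono rho n j : 0 < rho ->
  Integ [rho] (fun ts => mono n j (hd (RtoC 0) ts)) /\
  iter_contour [rho] (fun ts => mono n j (hd (RtoC 0) ts)) =
    (if Nat.eqb n j then (RtoC (2 * PI) * Ci)%C else 0%C).
Proof.
  intros Hr. pose proof (isR_mono rho n j Hr) as H.
  split.
  - split. intros; simpl; auto. eapply isR_ex. exact H.
  - rewrite iter_cons. apply (isR_unique _ _ H).
Qed.

Lemma csum_if (a : nat -> R) (n : nat) (V : C) J :
  csum (fun j => RtoC (a j) * (if Nat.eqb n j then V else 0%C))%C J =
  (if Nat.leb n J then RtoC (a n) * V else 0)%C.
Proof.
  induction J.
  - rewrite csum_0. destruct n; simpl; auto. ring.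
  - rewrite csum_S, IHJ. destruct (Nat.eqb_spec n (S J)).
    + subst. rewrite (proj2 (Nat.leb_nle (S J) J)) by lia. rewrite Nat.leb_refl. ring.
    + destruct (Nat.leb_spec n J); destruct (Nat.leb_spec n (S J)); try lia; ring.
Qed.

Definition fq (q : nat -> R) (n k : nat) (t : C) : C :=
  (Cpow t n * Cpow (pser q (/ t)) k * / t)%C.

Lemma single_contour (q : nat -> R) (rho Qv : R) (n k : nat) :
  0 < rho -> (forall j, 0 <= q j) -> is_series (fun j => q j * (/ rho) ^ j) Qv ->
  Integ [rho] (fun ts => fq q n k (hd (RtoC 0) ts)) /\
  iter_contour [rho] (fun ts => fq q n k (hd (RtoC 0) ts)) = (RtoC (2 * PI) * Ci * RtoC (pw q k n))%C.
Proof.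
  intros Hr Hq HQ.
  set (u := fun ts j => (RtoC (pw q k j) * mono n j (hd (RtoC 0) ts))%C).
  assert (HF : forall J, Integ [rho] (fun ts => csum (u ts) J) /\
     iter_contour [rho] (fun ts => csum (u ts) J) =
     csum (fun j => RtoC (pw q k j) * (if Nat.eqb n j then (RtoC (2 * PI) * Ci)%C else 0%C))%C J).
  { intros J. destruct (Integ_csum [rho] (fun j ts => u ts j)) with (J := J) as [A1 A2].
    { intros j. apply (Integ_cmul [rho] (RtoC (pw q k j)) _ (proj1 (Integ_mono rho n j Hr))). }
    split. exact A1. transitivity (iter_contour [rho] (fun ts => csum (fun j => u ts j) J)). reflexivity. rewrite A2. apply csum_ext_le. intros j _. unfold u.
    rewrite (proj2 (Integ_cmul [rho] (RtoC (pw q k j)) _ (proj1 (Integ_mono rho n j Hr)))).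
    rewrite (proj2 (Integ_mono rho n j Hr)). auto. }
  assert (HPS := pw_series q (/ rho) Qv Hq ltac:(apply Rlt_le, Rinv_0_lt_compat; auto) HQ k).
  assert (HU : UC [rho] (fun J ts => csum (u ts) J) (fun ts => fq q n k (hd (RtoC 0) ts))).
  { apply (UC_mtest [rho] u _ (fun j => pw q k j * (/ rho) ^ j * (rho ^ n * / rho))
       (Qv ^ k * (rho ^ n * / rho))).
    - apply (is_series_scal_r _ _ _ HPS).
    - intros ts j Hts. destruct ts as [|t [|]]; simpl in Hts; try tauto. destruct Hts as [[th E] _].
      subst t. unfold u. simpl hd. rewrite Cmod_mult, Cmod_R, Rabs_pos_eq by (apply pw_nonneg; auto).
      unfold mono. rewrite !Cmod_mult, !Cmod_pow, Cmod_inv, Cmod_circ by (auto; lra || apply circ_neq0; auto).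
      right. ring.
    - intros ts Hts. destruct ts as [|t [|]]; simpl in Hts; try tauto. destruct Hts as [[th E] _].
      subst t. simpl hd.
      assert (Hw : is_series (fun j => q j * Cmod (/ circ rho th)%C ^ j) Qv).
      { rewrite Cmod_inv, Cmod_circ by (auto; lra || apply circ_neq0; auto). exact HQ. }
      pose proof (CL_scal (Cpow (circ rho th) n * / circ rho th)%C _ _ (pw_CL q _ Qv Hq Hw k)) as C1.
      eapply CL_ext. 2: { replace (fq q n k (circ rho th)) with
         ((Cpow (circ rho th) n * / circ rho th) * Cpow (pser q (/ circ rho th)) k)%C.
         exact C1. unfold fq. ring. }
      intros J. cbv beta. rewrite <- csum_scal_l. apply csum_ext_le. intros j _. unfold u, mono. simpl hd.
      rewrite (pow_n_Cpow (/ circ rho th) j). ring. }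
  destruct (Integ_limit [rho] _ _ (fun J => proj1 (HF J)) HU) as [L1 L2].
  split. exact L1.
  apply (CL_unique (fun J => iter_contour [rho] (fun ts => csum (u ts) J))); auto.
  apply (CL_ext_ev (fun _ => (RtoC (2 * PI) * Ci * RtoC (pw q k n))%C) _ _ n).
  - intros J HJ. rewrite (proj2 (HF J)), csum_if. rewrite (proj2 (Nat.leb_le n J)) by auto. ring.
  - apply CL_const.
Qed.

Definition Qt (m : nat) (p : nat -> nat -> R) (ts : list C) : C :=
  Cprod (map (fun j => pser (p (j + 2)%nat) (Cinv (nth j ts (RtoC 1)))) (seq 0 (m - 1))).
Definition IVc (ts : list C) : C := Cprod (map Cinv ts).
Definition Pz m p (z : C) ts : C := (pser (p 1%nat) (z * Cprod ts) * Qt m p ts)%C.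
Definition Tk m p z (k : nat) ts : C := (Cpow (Pz m p z ts) k * IVc ts)%C.
Definition rsof (r : nat -> R) (m : nat) : list R := map r (seq 2 (m - 1)).

Lemma integrand_eq m p z ts : integrand m p z ts = (/ (1 - Pz m p z ts) * IVc ts)%C.
Proof. reflexivity. Qed.

Lemma Ekn_split m p k n : (1 <= m)%nat ->
  Ekn m p k n = pw (p 1%nat) k n * Rprod (map (fun i => pw (p i) k n) (seq 2 (m - 1))).
Proof.
  intros Hm. unfold Ekn. destruct m. lia. replace (S m - 1)%nat with m by lia.
  cbn [seq map]. unfold Rprod at 1. cbn [fold_right]. simpl (0 + 1)%nat. f_equal.
  rewrite <- (seq_shift m 1), (map_map S). unfold Rprod. f_equal. apply map_ext. intros i. f_equal. f_equal. lia.
Qed.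

Lemma Cprod_map_mult (c : C) (f : nat -> R) l :
  Cprod (map (fun i => c * RtoC (f i)) l)%C = (Cpow c (length l) * RtoC (Rprod (map f l)))%C.
Proof.
  induction l. unfold Cprod, Rprod; simpl. ring.
  unfold Cprod, Rprod in *. simpl. rewrite IHl, RtoC_mult. ring.
Qed.

Lemma Kc_IV rs : (forall x, In x rs -> 0 < x) ->
  Kc rs * fold_right Rmult 1 (map Rinv rs) = (2 * PI) ^ (length rs).
Proof.
  induction rs; intros H. simpl. ring. simpl.
  rewrite <- IHrs by (intros; apply H; simpl; auto). specialize (H a (or_introl eq_refl)).
  rewrite Rabs_pos_eq by lra. field. lra.
Qed.

Lemma geom_C (P : C) N : ((1 - P) * csum (fun k => Cpow P k) N = 1 - Cpow P (S N))%C.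
Proof.
  induction N. rewrite csum_0. simpl. ring.
  rewrite csum_S. replace ((1 - P) * (csum (fun k => Cpow P k) N + Cpow P (S N)))%C with
    ((1 - P) * csum (fun k => Cpow P k) N + (1 - P) * Cpow P (S N))%C by ring.
  rewrite IHN. simpl. ring.
Qed.

Lemma csum_swap (f : nat -> nat -> C) M : forall N,
  csum (fun i => csum (fun j => f i j) M) N = csum (fun j => csum (fun i => f i j) N) M.
Proof.
  induction N.
  - rewrite csum_0. apply csum_ext_le. intros. rewrite csum_0. auto.
  - rewrite csum_S, IHN, <- csum_plus. apply csum_ext_le. intros. rewrite csum_S. auto.
Qed.

Lemma rsof_pos r m : (forall i, (2 <= i <= m)%nat -> 0 < r i) -> forall x, In x (rsof r m) -> 0 < x.
Proof.
  intros H x Hx. unfold rsof in Hx. apply in_map_iff in Hx. destruct Hx as [i [E Hi]].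
  apply in_seq in Hi. subst. apply H. lia.
Qed.

Lemma rsof_length r m : length (rsof r m) = (m - 1)%nat.
Proof. unfold rsof. rewrite length_map, length_seq. auto. Qed.

Lemma Qt_eq m p r ts : OnT (rsof r m) ts ->
  Qt m p ts = prodI (fun i t => pser (p i) (/ t)%C) 2 ts.
Proof.
  intros H. rewrite <- Cprod_map_nth. unfold Qt. rewrite (OnT_length _ _ H), rsof_length.
  f_equal. apply map_ext. intros j. f_equal. f_equal. lia.
Qed.

Lemma Cmod_inv_circ r th : 0 < r -> Cmod (/ circ r th)%C = / r.
Proof. intros Hr. rewrite Cmod_inv, Cmod_circ; auto; try lra. apply circ_neq0; auto. Qed.

Lemma Cmod_Qt_le m p r Qs
  (Hp : forall i j, (1 <= i <= m)%nat -> 0 <= p i j)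
  (Hr : forall i, (2 <= i <= m)%nat -> 0 < r i)
  (HQ : forall i, (2 <= i <= m)%nat -> is_series (fun j => p i j * (/ r i) ^ j) (Qs i)) ts :
  OnT (rsof r m) ts -> Cmod (Qt m p ts) <= Rprod (map Qs (seq 2 (m - 1))).
Proof.
  intros H. rewrite (Qt_eq m p r ts H). apply (prodI_bound r _ Qs (m - 1) 2 ts H).
  intros i th Hi. apply pser_bound. intros; apply Hp; lia.
  rewrite Cmod_inv_circ by (apply Hr; lia). apply HQ. lia.
Qed.

Lemma core_Tk (m : nat) (p : nat -> nat -> R) (r : nat -> R) (Qs : nat -> R) (z : C) (A : R)
  (Hm : (2 <= m)%nat)
  (Hp : forall i j, (1 <= i <= m)%nat -> 0 <= p i j)
  (Hr : forall i, (2 <= i <= m)%nat -> 0 < r i)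
  (HQ : forall i, (2 <= i <= m)%nat -> is_series (fun j => p i j * (/ r i) ^ j) (Qs i))
  (HA : is_series (fun j => p 1%nat j * (Cmod z * fold_right Rmult 1 (rsof r m)) ^ j) A) (k : nat) :
  Integ (rsof r m) (Tk m p z k) /\
  CL (csum (fun n => RtoC (Ekn m p k n) * Cpow z n)%C)
     (/ Cpow (RtoC (2 * PI) * Ci) (m - 1) * iter_contour (rsof r m) (Tk m p z k))%C.
Proof.
  set (c := (RtoC (2 * PI) * Ci)%C).
  set (Rp := fold_right Rmult 1 (rsof r m)).
  set (IVb := fold_right Rmult 1 (map Rinv (rsof r m))).
  set (Qprod := Rprod (map Qs (seq 2 (m - 1)))).
  set (h := fun n i t => fq (p i) n k t).
  set (U := fun ts n => (RtoC (pw (p 1%nat) k n) * Cpow z n * prodI (h n) 2 ts)%C).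
  assert (Hp1 : forall j, 0 <= p 1%nat j) by (intros; apply Hp; lia).
  assert (Hpos := rsof_pos r m Hr).
  assert (HUi : forall n, Integ (rsof r m) (fun ts => U ts n) /\
     iter_contour (rsof r m) (fun ts => U ts n) = (Cpow c (m - 1) * (RtoC (Ekn m p k n) * Cpow z n))%C).
  { intros n.
    destruct (Integ_prodI r (h n) (fun i => c * RtoC (pw (p i) k n))%C (m - 1) 2) as [I1 I2].
    { intros i Hi. destruct (single_contour (p i) (r i) (Qs i) n k) as [S1 S2].
      apply Hr; lia. intros; apply Hp; lia. apply HQ; lia.
      pose proof (single_isR _ _ S1) as S3. rewrite S2 in S3. exact S3. }
    destruct (Integ_cmul _ (RtoC (pw (p 1%nat) k n) * Cpow z n)%C _ I1) as [C1 C2].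
    split. exact C1. unfold rsof in *. unfold U. rewrite C2, I2, Cprod_map_mult, length_seq.
    rewrite (Ekn_split m p k n) by lia. rewrite RtoC_mult. fold c. ring. }
  assert (Htor : forall ts, OnT (rsof r m) ts ->
     forall n, prodI (h n) 2 ts = (Cpow (Cprod ts) n * Cpow (Qt m p ts) k * IVc ts)%C).
  { intros ts Hts n. rewrite (Qt_eq m p r ts Hts). unfold h, fq.
    rewrite (prodI_split n k (fun i t => pser (p i) (/ t)%C)). rewrite <- (Cprod_map_nth (fun i t => pser (p i) (/ t)%C) ts 2). reflexivity. }
  assert (HU : UC (rsof r m) (fun N ts => csum (U ts) N) (Tk m p z k)).
  { apply (UC_mtest _ U _ (fun n => pw (p 1%nat) k n * (Cmod z * Rp) ^ n * (Qprod ^ k * IVb))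
        (A ^ k * (Qprod ^ k * IVb))).
    - apply is_series_scal_r. apply pw_series; auto.
      apply Rmult_le_pos. apply Cmod_ge_0. unfold Rp. clear -Hpos. induction (rsof r m). simpl; lra.
      simpl. apply Rmult_le_pos. apply Rlt_le, Hpos; simpl; auto. apply IHl. intros; apply Hpos; simpl; auto.
    - intros ts n Hts. unfold U. rewrite Htor by auto.
      rewrite !Cmod_mult, !Cmod_pow, Cmod_R, Rabs_pos_eq by (apply pw_nonneg; auto).
      unfold IVc. rewrite (Cmod_Cprod_T _ ts Hts Hpos), (Cmod_Cprod_inv_T _ ts Hts Hpos).
      fold Rp IVb. rewrite Rpow_mult_distr.
      assert (Q := Cmod_Qt_le m p r Qs Hp Hr HQ ts Hts). fold Qprod in Q.
      assert (0 <= IVb). { unfold IVb. clear -Hpos. induction (rsof r m). simpl; lra.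
        simpl. apply Rmult_le_pos. apply Rlt_le, Rinv_0_lt_compat, Hpos; simpl; auto. apply IHl. intros; apply Hpos; simpl; auto. }
      assert (Cmod (Qt m p ts) ^ k <= Qprod ^ k). { apply pow_incr. split; auto. apply Cmod_ge_0. }
      pose proof (pw_nonneg (p 1%nat) Hp1 k n). pose proof (pow_le (Cmod z) n (Cmod_ge_0 z)).
      assert (0 <= Rp ^ n). { apply pow_le. unfold Rp. clear -Hpos. induction (rsof r m). simpl; lra.
        simpl. apply Rmult_le_pos. apply Rlt_le, Hpos; simpl; auto. apply IHl. intros; apply Hpos; simpl; auto. }
      pose proof (pow_le (Cmod (Qt m p ts)) k (Cmod_ge_0 _)).
      replace (pw (p 1%nat) k n * Cmod z ^ n * (Rp ^ n * Cmod (Qt m p ts) ^ k * IVb)) with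
        ((pw (p 1%nat) k n * Cmod z ^ n * Rp ^ n * IVb) * Cmod (Qt m p ts) ^ k) by ring.
      replace (pw (p 1%nat) k n * (Cmod z ^ n * Rp ^ n) * (Qprod ^ k * IVb)) with
        ((pw (p 1%nat) k n * Cmod z ^ n * Rp ^ n * IVb) * Qprod ^ k) by ring.
      apply Rmult_le_compat_l; auto. repeat apply Rmult_le_pos; auto.
    - intros ts Hts.
      set (w := (z * Cprod ts)%C).
      assert (Hw : is_series (fun j => p 1%nat j * Cmod w ^ j) A).
      { unfold w. rewrite Cmod_mult, (Cmod_Cprod_T _ ts Hts Hpos). exact HA. }
      pose proof (CL_scal (Cpow (Qt m p ts) k * IVc ts)%C _ _ (pw_CL (p 1%nat) w A Hp1 Hw k)) as C1.
      eapply CL_ext. 2: { replace (Tk m p z k ts) with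
          ((Cpow (Qt m p ts) k * IVc ts) * Cpow (pser (p 1%nat) w) k)%C. exact C1.
          unfold Tk, Pz. fold w. rewrite Cpow_mult_l. ring. }
      intros N. cbv beta. rewrite <- csum_scal_l. apply csum_ext_le. intros n _. unfold U.
      rewrite Htor by auto. unfold w. rewrite (pow_n_Cpow (z * Cprod ts)%C n), Cpow_mult_l. ring. }
  destruct (Integ_limit _ _ _ (fun N => proj1 (Integ_csum _ (fun n ts => U ts n) (fun n => proj1 (HUi n)) N)) HU)
    as [L1 L2].
  split. exact L1.
  assert (Hc : Cpow c (m - 1) <> 0%C). { apply Cpow_nz. unfold c. intros E.
    apply (f_equal snd) in E. simpl in E. pose proof PI_RGT_0. lra. }
  apply (CL_ext (fun N => / Cpow c (m - 1) * iter_contour (rsof r m) (fun ts => csum (U ts) N))%C).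
  - intros N. transitivity (/ Cpow c (m - 1) * iter_contour (rsof r m) (fun ts => csum (fun n => U ts n) N))%C.
    reflexivity.
    rewrite (proj2 (Integ_csum _ (fun n ts => U ts n) (fun n => proj1 (HUi n)) N)).
    rewrite (csum_ext_le _ (fun n => Cpow c (m - 1) * (RtoC (Ekn m p k n) * Cpow z n))%C).
    rewrite csum_scal_l. field. auto.
    intros n _. apply HUi.
  - apply CL_scal. exact L2.
Qed.

Lemma series_nonneg (b : nat -> R) B : (forall n, 0 <= b n) -> is_series b B -> 0 <= B.
Proof.
  intros Hb H. apply Rnot_lt_le. intros HB.
  destruct (is_series_R_eps b B H (- B) ltac:(lra)) as [N HN]. specialize (HN N (le_n _)).
  assert (0 <= sum_f_R0 b N) by (apply cond_pos_sum; auto).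
  apply Rabs_def2 in HN. lra.
Qed.

Lemma p1_bound (a : nat -> R) (x0 A1 : R) (w : C) :
  (forall j, 0 <= a j) -> a 0%nat = 0 -> 0 < x0 -> is_series (fun j => a j * x0 ^ j) A1 ->
  Cmod w <= x0 -> ex_series (fun j => a j * Cmod w ^ j) ->
  Cmod (pser a w) <= Cmod w / x0 * A1.
Proof.
  intros Ha Ha0 Hx0 HA1 Hw Hex.
  apply (CL_Cmod_le (pser_partial a w)).
  { apply pser_CL. eapply ex_series_ext. 2: exact Hex. intros j. rewrite Rabs_pos_eq; auto. }
  exists 0%nat. intros N _. rewrite pser_partial_csum. eapply Rle_trans. apply Cmod_csum_le.
  assert (Hc : 0 <= Cmod w / x0). { apply Rdiv_le_0_compat. apply Cmod_ge_0. lra. }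
  eapply Rle_trans with (sum_f_R0 (fun j => Cmod w / x0 * (a j * x0 ^ j)) N).
  - apply sum_Rle. intros j _. rewrite Cmod_term, Rabs_pos_eq by auto. destruct j.
    + rewrite Ha0. lra.
    + simpl. replace (Cmod w / x0 * (a (S j) * (x0 * x0 ^ j))) with (a (S j) * (Cmod w * x0 ^ j)) by (field; lra).
      apply Rmult_le_compat_l; auto. apply Rmult_le_compat_l. apply Cmod_ge_0.
      apply pow_incr. split; auto. apply Cmod_ge_0.
  - rewrite (sum_eq _ (fun j => (a j * x0 ^ j) * (Cmod w / x0))) by (intros; ring).
    rewrite <- scal_sum. apply Rmult_le_compat_l; auto.
    apply (series_partial_le _ A1); auto. intros j. apply Rmult_le_pos; auto. apply pow_le; lra.
Qed.

Lemma core_int m p r z (Hr : forall i, (2 <= i <= m)%nat -> 0 < r i)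
  (HP : forall ts, OnT (rsof r m) ts -> Cmod (Pz m p z ts) <= 1/2)
  (HT : forall k, Integ (rsof r m) (Tk m p z k)) :
  Integ (rsof r m) (integrand m p z) /\
  CL (csum (fun k => iter_contour (rsof r m) (Tk m p z k))) (iter_contour (rsof r m) (integrand m p z)).
Proof.
  assert (Hpos := rsof_pos r m Hr).
  set (IVb := fold_right Rmult 1 (map Rinv (rsof r m))).
  assert (HIV : 0 <= IVb). { unfold IVb. clear -Hpos. induction (rsof r m). simpl; lra.
    simpl. apply Rmult_le_pos. apply Rlt_le, Rinv_0_lt_compat, Hpos; simpl; auto. apply IHl. intros; apply Hpos; simpl; auto. }
  assert (HU : UC (rsof r m) (fun N ts => csum (fun k => Tk m p z k ts) N) (integrand m p z)).
  { intros eps He.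
    destruct (pow_lt_1_zero (1/2) ltac:(rewrite Rabs_pos_eq; lra) (eps / (IVb + 1))) as [N0 HN0].
    { apply Rdiv_lt_0_compat; lra. }
    exists N0. intros N HN ts Hts.
    specialize (HP ts Hts). set (P := Pz m p z ts) in *.
    assert (H1P : 1/2 <= Cmod (1 - P)%C).
    { pose proof (Cmod_triangle (1 - P)%C P). replace (1 - P + P)%C with (RtoC 1) in H by ring.
      rewrite Cmod_1 in H. lra. }
    assert (HnP : (1 - P)%C <> 0%C). { intros E. rewrite E, Cmod_0 in H1P. lra. }
    assert (E : (csum (fun k => Tk m p z k ts) N - integrand m p z ts)%C =
       (- (Cpow P (S N) / (1 - P)) * IVc ts)%C).
    { rewrite integrand_eq. fold P. unfold Tk. fold P.
      rewrite (csum_ext_le _ (fun k => IVc ts * Cpow P k)%C) by (intros; ring).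
      rewrite csum_scal_l.
      assert (G := geom_C P N).
      assert (E2 : csum (fun k => Cpow P k) N = ((1 - Cpow P (S N)) / (1 - P))%C) by (rewrite <- G; field; auto).
      change (csum (Cpow P) N) with (csum (fun k => Cpow P k) N). rewrite E2. field. auto. }
    rewrite E. rewrite !Cmod_mult, Cmod_opp, Cmod_div, Cmod_pow by auto.
    unfold IVc. rewrite (Cmod_Cprod_inv_T _ ts Hts Hpos). fold IVb.
    specialize (HN0 N HN). rewrite Rabs_pos_eq in HN0 by (apply pow_le; lra).
    assert (Cmod P ^ S N <= (1/2) ^ S N). { apply pow_incr. split; auto. apply Cmod_ge_0. }
    assert (Cmod P ^ S N / Cmod (1 - P) <= (1/2) ^ N).
    { unfold Rdiv. apply Rmult_le_reg_r with (Cmod (1 - P)%C). lra.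
      rewrite Rmult_assoc, Rinv_l by lra. simpl in *. pose proof (pow_le (1/2) N). nra. }
    pose proof (pow_le (1/2) N ltac:(lra)).
    assert ((1/2)^N * IVb <= eps). { apply Rmult_lt_compat_r with (r := IVb + 1) in HN0; [|lra].
      unfold Rdiv in HN0. rewrite Rmult_assoc, Rinv_l in HN0 by lra. nra. }
    pose proof (Cmod_ge_0 (Cpow P (S N))).
    apply Rle_trans with ((1/2)^N * IVb); auto. apply Rmult_le_compat_r; auto. }
  destruct (Integ_limit _ _ _ (fun N => proj1 (Integ_csum _ (fun k => Tk m p z k) HT N)) HU) as [L1 L2].
  split. exact L1. eapply CL_ext. 2: exact L2. intros N. cbv beta.
  rewrite <- (proj2 (Integ_csum _ (fun k => Tk m p z k) HT N)). reflexivity.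
Qed.

Lemma Cpow_RtoC x n : Cpow (RtoC x) n = RtoC (x ^ n).
Proof. induction n. reflexivity. simpl. rewrite IHn, RtoC_mult. auto. Qed.

Lemma term_le_lim (f : nat -> R) (x : R) L : (forall n, 0 <= f n) -> 0 <= x ->
  CL (csum (fun n => RtoC (f n) * Cpow (RtoC x) n)%C) L -> forall n, f n * x ^ n <= Cmod L.
Proof.
  intros Hf Hx H n. apply Rle_trans with (fst L).
  2:{ eapply Rle_trans. apply Rle_abs. apply Rabs_fst_le. }
  apply Rnot_lt_le. intros Hc. destruct (H (f n * x ^ n - fst L) ltac:(lra)) as [N HN].
  specialize (HN (N + n)%nat ltac:(lia)).
  pose proof (Rle_lt_trans _ _ _ (Rabs_fst_le _) HN) as H2.
  replace (fst (csum (fun n0 => RtoC (f n0) * Cpow (RtoC x) n0)%C (N + n) - L)%C) with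
    (fst (csum (fun n0 => RtoC (f n0) * Cpow (RtoC x) n0)%C (N + n)) - fst L) in H2 by (simpl; ring).
  rewrite fst_csum in H2.
  assert (E : forall j, fst (RtoC (f j) * Cpow (RtoC x) j)%C = f j * x ^ j).
  { intros j. rewrite Cpow_RtoC. simpl. ring. }
  rewrite (sum_eq _ (fun j => f j * x ^ j)) in H2 by (intros; apply E).
  assert (Hle : f n * x ^ n <= sum_f_R0 (fun j => f j * x ^ j) (N + n)).
  { replace (N + n)%nat with (n + N)%nat by lia.
    eapply Rle_trans. 2: apply sum_f_R0_mono. 2: intros; apply Rmult_le_pos; auto; apply pow_le; auto.
    destruct n. simpl. lra. simpl. pose proof (cond_pos_sum (fun j => f j * x ^ j) n).
    assert (0 <= sum_f_R0 (fun j => f j * x ^ j) n) by (apply H0; intros; apply Rmult_le_pos; auto; apply pow_le; auto).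
    lra. }
  apply Rabs_def2 in H2. lra.
Qed.

Lemma sum_extend (f : nat -> R) n : (forall k, (n < k)%nat -> f k = 0) ->
  forall N, (n <= N)%nat -> sum_f_R0 f n = sum_f_R0 f N.
Proof.
  intros H N HN. induction HN. auto. simpl. rewrite H by lia. rewrite IHHN. ring.
Qed.

Lemma exists_x0 (R0 : Rbar) : Rbar_lt (Finite 0) R0 -> exists x0, 0 < x0 /\ Rbar_lt (Finite x0) R0.
Proof.
  destruct R0 as [v| |]; simpl; intros H.
  - exists (v / 2). split; lra.
  - exists 1. split; lra.
  - contradiction.
Qed.

Lemma Rprod_nonneg (f : nat -> R) l : (forall i, In i l -> 0 <= f i) -> 0 <= Rprod (map f l).
Proof.
  induction l; intros H. unfold Rprod; simpl; lra. unfold Rprod in *; simpl.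
  apply Rmult_le_pos. apply H; simpl; auto. apply IHl. intros; apply H; simpl; auto.
Qed.

Lemma fold_pos l : (forall x, In x l -> 0 < x) -> 0 < fold_right Rmult 1 l.
Proof.
  induction l; intros H; simpl. lra. apply Rmult_lt_0_compat. apply H; simpl; auto.
  apply IHl. intros; apply H; simpl; auto.
Qed.

Lemma fold_inv_pos l : (forall x, In x l -> 0 < x) -> 0 <= fold_right Rmult 1 (map Rinv l).
Proof.
  induction l; intros H; simpl. lra. apply Rmult_le_pos. apply Rlt_le, Rinv_0_lt_compat, H; simpl; auto.
  apply IHl. intros; apply H; simpl; auto.
Qed.

Lemma Cmod_c : Cmod (RtoC (2 * PI) * Ci)%C = 2 * PI.
Proof. rewrite Cmod_mult, Cmod_R, Cmod_Ci, Rabs_pos_eq. ring. pose proof PI_RGT_0. lra. Qed.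

Lemma Ekn_nonneg m p k n : (forall i j, (1 <= i <= m)%nat -> 0 <= p i j) -> 0 <= Ekn m p k n.
Proof.
  intros Hp. unfold Ekn. apply Rprod_nonneg. intros i Hi. apply in_seq in Hi.
  apply pw_nonneg. intros; apply Hp; lia.
Qed.

Lemma Ekn_zero m p k n : (1 <= m)%nat -> p 1%nat 0%nat = 0 -> (n < k)%nat -> Ekn m p k n = 0.
Proof. intros Hm H0 H. rewrite Ekn_split by auto. rewrite pw_zero; auto. ring. Qed.

Lemma sum_scal_l c f N : sum_f_R0 (fun i => c * f i) N = c * sum_f_R0 f N.
Proof. induction N; simpl; [ring| rewrite IHN; ring]. Qed.

Lemma half_pow a n : a ^ n = (2 * a) ^ n * (1/2) ^ n.
Proof. rewrite <- Rpow_mult_distr. f_equal. field. Qed.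

Theorem proposition2 (m : nat) (p : nat -> nat -> R) (r : nat -> R) :
  (2 <= m)%nat ->
  (forall i j, (1 <= i <= m)%nat -> 0 <= p i j) ->
  (forall i, (1 <= i <= m)%nat -> p i 0%nat = 0) ->
  (forall i, (1 <= i <= m)%nat -> Rbar_lt (Finite 0) (CV_radius (p i))) ->
  (forall i, (2 <= i <= m)%nat ->
     0 < r i /\ Rbar_lt (Finite (/ r i)) (CV_radius (p i))) ->
  exists delta : R, 0 < delta /\
    forall z : C, Cmod z < delta ->
      @is_pseries C_AbsRing C_NormedModule (fun n => RtoC (Dcoef m p n)) z
        (Cmult (Cinv (@pow_n C_Ring (Cmult (RtoC (2 * PI)) Ci) (m - 1)))
               (iter_contour (map r (seq 2 (m - 1))) (integrand m p z))).
Proof.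
  intros Hm Hp Hp0 HR Hr.
  assert (Hr' : forall i, (2 <= i <= m)%nat -> 0 < r i) by (intros i Hi; apply (Hr i Hi)).
  set (Qs := fun i => Series (fun j => p i j * (/ r i) ^ j)).
  assert (HQ : forall i, (2 <= i <= m)%nat -> is_series (fun j => p i j * (/ r i) ^ j) (Qs i)).
  { intros i Hi. destruct (Hr i Hi) as [H1 H2]. apply Series_correct. apply ex_series_Rabs.
    apply CV_disk_inside. rewrite Rabs_pos_eq. exact H2. apply Rlt_le, Rinv_0_lt_compat; auto. }
  assert (Hp1 : forall j, 0 <= p 1%nat j) by (intros; apply Hp; lia).
  assert (Hp10 : p 1%nat 0%nat = 0) by (apply Hp0; lia).
  destruct (exists_x0 _ (HR 1%nat ltac:(lia))) as [x0 [Hx0 Hx0R]].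
  assert (Hser1 : forall s, 0 <= s <= x0 -> is_series (fun j => p 1%nat j * s ^ j) (Series (fun j => p 1%nat j * s ^ j))).
  { intros s Hs. apply Series_correct. apply ex_series_Rabs. apply CV_disk_inside.
    rewrite Rabs_pos_eq by lra. eapply Rbar_le_lt_trans. 2: exact Hx0R. simpl. lra. }
  set (A1 := Series (fun j => p 1%nat j * x0 ^ j)).
  assert (HA1 : is_series (fun j => p 1%nat j * x0 ^ j) A1) by (apply Hser1; lra).
  assert (HA1p : 0 <= A1). { apply (series_nonneg _ _ (fun j => Rmult_le_pos _ _ (Hp1 j) (pow_le _ j (Rlt_le _ _ Hx0))) HA1). }
  set (rs := rsof r m).
  assert (Hpos := rsof_pos r m Hr').
  set (Rp := fold_right Rmult 1 rs).
  assert (HRp : 0 < Rp) by (apply fold_pos; auto).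
  set (IVb := fold_right Rmult 1 (map Rinv rs)).
  assert (HIV : 0 <= IVb) by (apply fold_inv_pos; auto).
  set (Qprod := Rprod (map Qs (seq 2 (m - 1)))).
  assert (HQp : 0 <= Qprod).
  { apply Rprod_nonneg. intros i Hi. apply in_seq in Hi.
    apply (series_nonneg _ _ (fun j => Rmult_le_pos _ _ (Hp i j ltac:(lia)) (pow_le _ j (Rlt_le _ _ (Rinv_0_lt_compat _ (Hr' i ltac:(lia))))))
      (HQ i ltac:(lia))). }
  assert (HAQ : 0 <= A1 * Qprod) by (apply Rmult_le_pos; auto).
  set (x1 := x0 / (2 * (A1 * Qprod + 1))).
  assert (Hx1 : 0 < x1) by (unfold x1; apply Rdiv_lt_0_compat; nra).
  assert (Hx1x0 : x1 <= x0).
  { unfold x1. apply Rmult_le_reg_r with (2 * (A1 * Qprod + 1)). nra.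
    unfold Rdiv. rewrite Rmult_assoc, Rinv_l by nra. nra. }
  set (c := (RtoC (2 * PI) * Ci)%C).
  assert (Key : forall z, Cmod z * Rp <= x1 ->
     (forall k, Integ rs (Tk m p z k) /\
        CL (csum (fun n => RtoC (Ekn m p k n) * Cpow z n)%C) (/ Cpow c (m - 1) * iter_contour rs (Tk m p z k))%C) /\
     (forall ts, OnT rs ts -> Cmod (Pz m p z ts) <= 1/2)).
  { intros z Hz.
    assert (Hs : 0 <= Cmod z * Rp <= x0) by (pose proof (Cmod_ge_0 z); split; [apply Rmult_le_pos; lra | lra]).
    split.
    - intros k. apply (core_Tk m p r Qs z _ Hm Hp Hr' HQ (Hser1 _ Hs) k).
    - intros ts Hts. unfold Pz. rewrite Cmod_mult.
      assert (Hw : Cmod (z * Cprod ts)%C = Cmod z * Rp).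
      { rewrite Cmod_mult, (Cmod_Cprod_T _ ts Hts Hpos). auto. }
      assert (B1 : Cmod (pser (p 1%nat) (z * Cprod ts)) <= Cmod z * Rp / x0 * A1).
      { rewrite <- Hw. apply (p1_bound (p 1%nat) x0 A1 (z * Cprod ts)%C Hp1 Hp10 Hx0 HA1).
        rewrite Hw; lra.
        rewrite Hw. exists (Series (fun j => p 1%nat j * (Cmod z * Rp) ^ j)). apply Hser1. auto. }
      assert (B2 := Cmod_Qt_le m p r Qs Hp Hr' HQ ts Hts). fold Qprod in B2.
      assert (B3 : Cmod z * Rp / x0 * A1 <= x1 / x0 * A1).
      { apply Rmult_le_compat_r; auto. unfold Rdiv. apply Rmult_le_compat_r; auto.
        apply Rlt_le, Rinv_0_lt_compat; auto. }
      assert (B4 : x1 / x0 * A1 * Qprod <= 1/2).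
      { unfold x1. replace (x0 / (2 * (A1 * Qprod + 1)) / x0 * A1 * Qprod) with
          ((A1 * Qprod) / (2 * (A1 * Qprod + 1))) by (field; nra).
        apply Rmult_le_reg_r with (2 * (A1 * Qprod + 1)). nra.
        unfold Rdiv. rewrite Rmult_assoc, Rinv_l by nra. nra. }
      pose proof (Cmod_ge_0 (pser (p 1%nat) (z * Cprod ts))).
      pose proof (Cmod_ge_0 (Qt m p ts)).
      apply Rle_trans with ((x1 / x0 * A1) * Qprod); auto.
      apply Rmult_le_compat; auto. lra. }
  exists (x1 / (2 * Rp)). split. apply Rdiv_lt_0_compat; lra.
  intros z Hz.
  assert (Hz1 : Cmod z * Rp <= x1).
  { apply Rmult_lt_compat_r with (r := Rp) in Hz; auto.
    replace (x1 / (2 * Rp) * Rp) with (x1 / 2) in Hz by (field; lra). lra. }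
  set (s := RtoC (2 * Cmod z)).
  assert (Hsm : Cmod s = 2 * Cmod z) by (unfold s; rewrite Cmod_R, Rabs_pos_eq; auto; pose proof (Cmod_ge_0 z); lra).
  assert (Hs1 : Cmod s * Rp <= x1).
  { rewrite Hsm. apply Rmult_lt_compat_r with (r := Rp) in Hz; auto.
    replace (x1 / (2 * Rp) * Rp) with (x1 / 2) in Hz by (field; lra). lra. }
  destruct (Key s Hs1) as [Ks1 Ks2].
  destruct (Key z Hz1) as [Kz1 Kz2].
  assert (HcM : Cmod (Cpow c (m - 1)) = (2 * PI) ^ (m - 1)) by (rewrite Cmod_pow; unfold c; rewrite Cmod_c; auto).
  assert (Hc0 : Cpow c (m - 1) <> 0%C).
  { intros E. rewrite E, Cmod_0 in HcM. pose proof PI_RGT_0. pose proof (pow_lt (2 * PI) (m - 1) ltac:(lra)). lra. }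
  assert (Hbound : forall k n, Ekn m p k n * (2 * Cmod z) ^ n <= (1/2) ^ k).
  { intros k n. destruct (Ks1 k) as [I1 C1].
    eapply Rle_trans. apply (term_le_lim (Ekn m p k) (2 * Cmod z) (/ Cpow c (m - 1) * iter_contour rs (Tk m p s k))%C (fun n => Ekn_nonneg m p k n Hp)).
    pose proof (Cmod_ge_0 z); lra. exact C1.
    rewrite Cmod_mult, Cmod_inv, HcM by auto.
    assert (IB : Cmod (iter_contour rs (Tk m p s k)) <= Kc rs * ((1/2) ^ k * IVb)).
    { apply Integ_bound. auto. intros ts Hts. unfold Tk. rewrite Cmod_mult, Cmod_pow.
      unfold IVc. rewrite (Cmod_Cprod_inv_T _ ts Hts Hpos). fold IVb.
      apply Rmult_le_compat_r; auto. apply pow_incr. split. apply Cmod_ge_0. auto. }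
    assert (KI : Kc rs * IVb = (2 * PI) ^ (m - 1)).
    { unfold IVb. rewrite Kc_IV by auto. unfold rs. rewrite rsof_length. auto. }
    pose proof PI_RGT_0. pose proof (pow_lt (2 * PI) (m - 1) ltac:(lra)).
    apply Rle_trans with (/ (2 * PI) ^ (m - 1) * (Kc rs * ((1/2) ^ k * IVb))).
    apply Rmult_le_compat_l; auto. apply Rlt_le, Rinv_0_lt_compat; auto.
    replace (Kc rs * ((1/2) ^ k * IVb)) with ((1/2) ^ k * (Kc rs * IVb)) by ring. rewrite KI.
    right. field. lra. }
  set (Sz := fun k => (/ Cpow c (m - 1) * iter_contour rs (Tk m p z k))%C).
  assert (Htail : forall k N, Cmod (Sz k - csum (fun n => RtoC (Ekn m p k n) * Cpow z n)%C N)%C <= (1/2) ^ k * (1/2) ^ N).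
  { intros k N.
    assert (G : is_series (fun n => (1/2) ^ k * (1/2) ^ n) ((1/2) ^ k * 2)).
    { assert (G1 : Rabs (1/2) < 1) by (rewrite Rabs_pos_eq; lra).
      pose proof (is_series_scal_l ((1/2)^k) _ _ (is_series_geom (1/2) G1)) as G0.
      replace ((1/2)^k * 2) with (scal ((1/2)^k) (/(1 - 1/2))) by (unfold scal; simpl; unfold mult; simpl; field).
      exact G0. }
    eapply Rle_trans. apply (CL_tail (fun n => RtoC (Ekn m p k n) * Cpow z n)%C (fun n => (1/2) ^ k * (1/2) ^ n) ((1/2)^k * 2) (Sz k)).
    3: apply (proj2 (Kz1 k)). 2: exact G.
    - intros n. rewrite Cmod_mult, Cmod_R, Rabs_pos_eq, Cmod_pow by (apply Ekn_nonneg; auto).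
      specialize (Hbound k n).
      rewrite (half_pow (Cmod z) n).
      replace (Ekn m p k n * ((2 * Cmod z) ^ n * (1/2) ^ n)) with (Ekn m p k n * (2 * Cmod z) ^ n * (1/2) ^ n) by ring.
      apply Rmult_le_compat_r; auto. apply pow_le; lra.
    - rewrite sum_scal_l. rewrite tech3 by lra. right. simpl. field. }
  assert (HD : forall N, csum (fun n => RtoC (Dcoef m p n) * Cpow z n)%C N =
      csum (fun k => csum (fun n => RtoC (Ekn m p k n) * Cpow z n)%C N) N).
  { intros N. rewrite csum_swap. apply csum_ext_le. intros n Hn.
    rewrite csum_RtoC_scal. f_equal. f_equal. rewrite (Dcoef_eq m p (fun i Hi => Hp0 i Hi) n).
    apply sum_extend; auto. intros k Hk. apply Ekn_zero; auto. lia. }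
  destruct (core_int m p r z Hr' Kz2 (fun k => proj1 (Kz1 k))) as [CI1 CI2].
  assert (CS : CL (csum Sz) (/ Cpow c (m - 1) * iter_contour rs (integrand m p z))%C).
  { eapply CL_ext. 2: apply (CL_scal (/ Cpow c (m - 1))%C _ _ CI2). intros N. cbv beta.
    rewrite <- csum_scal_l. reflexivity. }
  assert (FIN : CL (csum (fun n => RtoC (Dcoef m p n) * Cpow z n)%C) (/ Cpow c (m - 1) * iter_contour rs (integrand m p z))%C).
  { intros eps He. destruct (CS (eps / 2) ltac:(lra)) as [N1 HN1].
    destruct (pow_lt_1_zero (1/2) ltac:(rewrite Rabs_pos_eq; lra) (eps / 4) ltac:(lra)) as [N2 HN2].
    exists (N1 + N2)%nat. intros N HN.
    specialize (HN1 N ltac:(lia)). specialize (HN2 N ltac:(lia)). rewrite Rabs_pos_eq in HN2 by (apply pow_le; lra).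
    assert (D1 : Cmod (csum (fun n => RtoC (Dcoef m p n) * Cpow z n)%C N - csum Sz N)%C <= 2 * (1/2) ^ N).
    { rewrite HD. rewrite <- Cmod_opp.
      replace (- (csum (fun k => csum (fun n => RtoC (Ekn m p k n) * Cpow z n)%C N) N - csum Sz N))%C with
        (csum (fun k => Sz k - csum (fun n => RtoC (Ekn m p k n) * Cpow z n)%C N) N)%C.
      2:{ rewrite (csum_ext_le _ (fun k => Sz k + (-1) * csum (fun n => RtoC (Ekn m p k n) * Cpow z n)%C N)%C) by (intros; ring).
          rewrite csum_plus, csum_scal_l. ring. }
      eapply Rle_trans. apply Cmod_csum_le.
      apply Rle_trans with (sum_f_R0 (fun k => (1/2) ^ k * (1/2) ^ N) N). apply sum_Rle. intros k _. apply Htail.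
      rewrite (sum_eq _ (fun k => (1/2) ^ N * (1/2) ^ k)) by (intros; ring).
      rewrite sum_scal_l, tech3 by lra. pose proof (pow_le (1/2) N ltac:(lra)).
      assert (0 <= (1/2) ^ S N) by (apply pow_le; lra).
      replace ((1 - (1/2) ^ S N) / (1 - 1/2)) with (2 - 2 * (1/2) ^ S N) by field. nra. }
    replace (csum (fun n => RtoC (Dcoef m p n) * Cpow z n)%C N - / Cpow c (m - 1) * iter_contour rs (integrand m p z))%C
      with ((csum (fun n => RtoC (Dcoef m p n) * Cpow z n)%C N - csum Sz N) +
            (csum Sz N - / Cpow c (m - 1) * iter_contour rs (integrand m p z)))%C by ring.
    eapply Rle_lt_trans. apply Cmod_triangle. lra. }
  unfold is_pseries, is_series.
  eapply filterlim_ext. 2: apply (CL_filterlim _ _ FIN).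
  intros N. cbv beta. unfold csum. apply sum_n_ext. intros n.
  change (scal (pow_n z n) (RtoC (Dcoef m p n))) with (Cmult (Cpow z n) (RtoC (Dcoef m p n))). apply Cmult_comm.
Qed.
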